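(* (Church-Rosser) For all terms $e, e_1, e_2$: if $e \to\!\!\to e_1$ and $e \to\!\!\to e_2$, then there exists a term $e'$ such that $e_1 \to\!\!\to e'$ and $e_2 \to\!\!\to e'$.
   Context: Terms: $e ::= x \mid \lambda x.e \mid e\,e$ (modulo $\alpha$-equivalence, Barendregt's variable convention). Values: $v ::= \lambda x.e$. A context is a term with one hole $[\,]$; $C[e]$ is plugging, $C_1[C_2]$ composition. Answer contexts: $A ::= [\,] \mid A[\lambda x.A]\,e$. Outer partial answer contexts: $A^{\uparrow} ::= [\,] \mid A[A^{\uparrow}]\,e$. Inner partial answer contexts: $A^{\downarrow} ::= [\,] \mid A[\lambda x.A^{\downarrow}]$. Evaluation contexts: $E ::= [\,] \mid E\,e \mid A[E] \mid A^{\uparrow}[A[\lambda x.A^{\downarrow}[E[x]]]\,E]$, where in the last production $A^{\uparrow}[A^{\downarrow}]$ must be an answer context. Axiom $\beta_{need}$: $A^{\uparrow}[A_1[\lambda x.A^{\downarrow}[E[x]]]\,A_2[v]] \;\beta_{need}\; A^{\uparrow}[A_1[A_2[(A^{\downarrow}[E[x]])\{x:=v\}]]]$ provided $A^{\uparrow}[A^{\downarrow}]$ is an answer context ($\{x:=v\}$ capture-avoiding substitution for all free occurrences of $x$). $\to$ is the compatible closure of $\beta_{need}$ (closure under contexts $C ::= [\,] \mid \lambda x.C \mid C\,e \mid e\,C$) and $\to\!\!\to$ its reflexive–transitive closure. *)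

(* Defs.v *)
(* Call-by-need lambda calculus; terms modulo alpha-equivalence
   are represented with de Bruijn indices. *)
From Stdlib Require Import Arith Relations.

Inductive term : Type :=
| Var : nat -> term
| Lam : term -> term
| App : term -> term -> term.

Fixpoint shift (d c : nat) (t : term) : term :=
  match t with
  | Var i => if Nat.ltb i c then Var i else Var (i + d)
  | Lam b => Lam (shift d (S c) b)
  | App t1 t2 => App (shift d c t1) (shift d c t2)
  end.

Definition up (s : nat -> term) : nat -> term :=
  fun i => match i with 0 => Var 0 | S j => shift 1 0 (s j) end.

Fixpoint subst (s : nat -> term) (t : term) : term :=
  match t with
  | Var i => s i
  | Lam b => Lam (subst (up s) b)
  | App t1 t2 => App (subst s t1) (subst s t2)
  end.

Inductive ctx : Type :=
| Hole : ctx
| CLam : ctx -> ctx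
| CAppL : ctx -> term -> ctx
| CAppR : term -> ctx -> ctx.

(* Plugging (may capture, as in the paper). *)
Fixpoint plug (C : ctx) (t : term) : term :=
  match C with
  | Hole => t
  | CLam C' => Lam (plug C' t)
  | CAppL C' e => App (plug C' t) e
  | CAppR e C' => App e (plug C' t)
  end.

Fixpoint comp (C1 C2 : ctx) : ctx :=
  match C1 with
  | Hole => C2
  | CLam C' => CLam (comp C' C2)
  | CAppL C' e => CAppL (comp C' C2) e
  | CAppR e C' => CAppR e (comp C' C2)
  end.

Fixpoint depth (C : ctx) : nat :=
  match C with
  | Hole => 0
  | CLam C' => S (depth C')
  | CAppL C' _ => depth C'
  | CAppR _ C' => depth C'
  end.

Fixpoint shiftc (d c : nat) (C : ctx) : ctx :=
  match C with
  | Hole => Hole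
  | CLam C' => CLam (shiftc d (S c) C')
  | CAppL C' e => CAppL (shiftc d c C') (shift d c e)
  | CAppR e C' => CAppR (shift d c e) (shiftc d c C')
  end.

Inductive isA : ctx -> Prop :=
| isA_hole : isA Hole
| isA_app : forall A1 A2 e, isA A1 -> isA A2 -> isA (CAppL (comp A1 (CLam A2)) e).

Inductive isAup : ctx -> Prop :=
| isAup_hole : isAup Hole
| isAup_app : forall A U e, isA A -> isAup U -> isAup (CAppL (comp A U) e).

Inductive isAdown : ctx -> Prop :=
| isAdown_hole : isAdown Hole
| isAdown_lam : forall A D, isA A -> isAdown D -> isAdown (comp A (CLam D)).

(* E ::= [] | E e | A[E] | A^up[A[\x.A^down[E[x]]] E]   (A^up[A^down] answer ctx)
   In E[x], x is the variable bound by the displayed lambda; its de Bruijn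
   index is the number of binders of A^down and E above the hole. *)
Inductive isE : ctx -> Prop :=
| isE_hole : isE Hole
| isE_appL : forall E e, isE E -> isE (CAppL E e)
| isE_ans : forall A E, isA A -> isE E -> isE (comp A E)
| isE_need : forall U A D E1 E2,
    isAup U -> isA A -> isAdown D -> isE E1 -> isE E2 -> isA (comp U D) ->
    isE (comp U (CAppR (plug A (Lam (plug D (plug E1 (Var (depth D + depth E1)))))) E2)).

(* beta_need:
   A^up[A1[\x.A^down[E[x]]] A2[v]]  ->  A^up[A1[A2[(A^down[E[x]]){x:=v}]]]
   The argument A2[v] is moved under the binders of A1, hence shifted by
   depth A1 (Barendregt convention); body indices other than x are shifted
   past the binders of A2. *)
Definition need_sub (k1 k2 : nat) (v : term) : nat -> term :=
  fun i => match i with 0 => shift k1 k2 v | S j => Var (j + k2) end.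

Inductive beta_need : term -> term -> Prop :=
| beta_need_rule : forall U A1 D E A2 b,
    isAup U -> isA A1 -> isAdown D -> isE E -> isA A2 -> isA (comp U D) ->
    beta_need
      (plug U (App (plug A1 (Lam (plug D (plug E (Var (depth D + depth E))))))
                   (plug A2 (Lam b))))
      (plug U (plug A1 (plug (shiftc (depth A1) 0 A2)
         (subst (need_sub (depth A1) (depth A2) (Lam b))
                (plug D (plug E (Var (depth D + depth E)))))))).

Inductive step : term -> term -> Prop :=
| step_root : forall t u, beta_need t u -> step t u
| step_lam : forall t u, step t u -> step (Lam t) (Lam u)
| step_appL : forall t u e, step t u -> step (App t e) (App u e)
| step_appR : forall t u e, step t u -> step (App e t) (App e u).

Definition steps : term -> term -> Prop := clos_refl_trans term step.

(* Main.v *)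
(* Church-Rosser for the call-by-need calculus, via marked
   developments and a walker-based characterisation of need-redexes. *)
From Stdlib Require Import Relations Arith Lia List Bool ZArith.
Require Import Defs.
From Stdlib Require Import Relations.
Open Scope bool_scope.

Inductive mt : Type :=
| MV : nat -> mt
| ML : mt -> mt
| MA : nat -> mt -> mt -> mt.

Definition uren (xi : nat -> nat) (i : nat) : nat :=
  match i with 0 => 0 | S j => S (xi j) end.

Fixpoint mren (xi : nat -> nat) (M : mt) : mt :=
  match M with
  | MV i => MV (xi i)
  | ML M => ML (mren (uren xi) M)
  | MA l M N => MA l (mren xi M) (mren xi N)
  end.

Definition mup (s : nat -> mt) (i : nat) : mt :=
  match i with 0 => MV 0 | S j => mren S (s j) end.

Fixpoint msub (s : nat -> mt) (M : mt) : mt :=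
  match M with
  | MV i => s i
  | ML M => ML (msub (mup s) M)
  | MA l M N => MA l (msub s M) (msub s N)
  end.

Lemma mren_ext : forall M xi zeta, (forall i, xi i = zeta i) -> mren xi M = mren zeta M.
Proof.
  induction M; intros; simpl; f_equal; auto.
  apply IHM. intros [|i]; simpl; auto.
Qed.

Lemma msub_ext : forall M s t, (forall i, s i = t i) -> msub s M = msub t M.
Proof.
  induction M; intros; simpl; f_equal; auto.
  apply IHM. intros [|i]; simpl; auto. rewrite H; auto.
Qed.

Lemma mren_mren : forall M xi zeta, mren xi (mren zeta M) = mren (fun i => xi (zeta i)) M.
Proof.
  induction M; intros; simpl; f_equal; auto.
  rewrite IHM. apply mren_ext. intros [|i]; simpl; auto.
Qed.

Lemma mren_msub : forall M xi s, mren xi (msub s M) = msub (fun i => mren xi (s i)) M.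
Proof.
  induction M; intros; simpl; f_equal; auto.
  rewrite IHM. apply msub_ext. intros [|i]; simpl; auto.
  rewrite !mren_mren. apply mren_ext. intros; simpl; auto.
Qed.

Lemma msub_mren : forall M xi s, msub s (mren xi M) = msub (fun i => s (xi i)) M.
Proof.
  induction M; intros; simpl; f_equal; auto.
  rewrite IHM. apply msub_ext. intros [|i]; simpl; auto.
Qed.

Lemma msub_msub : forall M s t, msub s (msub t M) = msub (fun i => msub s (t i)) M.
Proof.
  induction M; intros; simpl; f_equal; auto.
  rewrite IHM. apply msub_ext. intros [|i]; simpl; auto.
  rewrite msub_mren, mren_msub. apply msub_ext. intros; simpl; auto.
Qed.

Lemma msub_id : forall M, msub MV M = M.
Proof.
  induction M; simpl; f_equal; auto.
  rewrite <- IHM at 2. apply msub_ext. intros [|i]; simpl; auto.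
Qed.

Lemma mren_as_msub : forall M xi, mren xi M = msub (fun i => MV (xi i)) M.
Proof.
  induction M; intros; simpl; f_equal; auto.
  rewrite IHM. apply msub_ext. intros [|i]; simpl; auto.
Qed.

Fixpoint um (M : mt) : mt :=
  match M with MV i => MV i | ML M => ML (um M) | MA _ M N => MA 0 (um M) (um N) end.

Fixpoint erase (M : mt) : term :=
  match M with MV i => Var i | ML M => Lam (erase M) | MA _ M N => App (erase M) (erase N) end.

Fixpoint lift (t : term) : mt :=
  match t with Var i => MV i | Lam t => ML (lift t) | App t u => MA 0 (lift t) (lift u) end.

Lemma erase_lift : forall t, erase (lift t) = t.
Proof. induction t; simpl; f_equal; auto. Qed.
Lemma lift_erase : forall M, lift (erase M) = um M.
Proof. induction M; simpl; f_equal; auto. Qed.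
Lemma um_mren : forall M xi, um (mren xi M) = mren xi (um M).
Proof. induction M; intros; simpl; f_equal; auto. Qed.
Lemma um_msub : forall M s, um (msub s M) = msub (fun i => um (s i)) (um M).
Proof.
  induction M; intros; simpl; f_equal; auto.
  rewrite IHM. apply msub_ext. intros [|i]; simpl; auto. apply um_mren.
Qed.
Lemma erase_um : forall M, erase (um M) = erase M.
Proof. induction M; simpl; f_equal; auto. Qed.

Definition shf (d c : nat) (i : nat) : nat := if Nat.ltb i c then i else i + d.

Lemma lift_shift : forall t d c, lift (shift d c t) = mren (shf d c) (lift t).
Proof.
  induction t; intros; simpl.
  - unfold shf. destruct (Nat.ltb n c); reflexivity.
  - f_equal. rewrite IHt. apply mren_ext. intros [|i]; unfold shf; simpl; auto.
    replace (S i <? S c) with (i <? c) by reflexivity.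
    destruct (Nat.ltb i c); auto.
  - f_equal; auto.
Qed.

Lemma lift_subst : forall t s, lift (subst s t) = msub (fun i => lift (s i)) (lift t).
Proof.
  induction t; intros; simpl; auto.
  - f_equal. rewrite IHt. apply msub_ext. intros [|i]; simpl; auto.
    rewrite lift_shift. apply mren_ext. intros; unfold shf; simpl. destruct i; simpl; lia.
  - f_equal; auto.
Qed.

Definition nsub (v : mt) (k : nat) (i : nat) : mt :=
  match i with 0 => v | S j => MV (j + k) end.

Fixpoint mpa (c k : nat) (G B : mt) : mt :=
  match G with
  | MA l M e => MA l (mpa (S c) k M B) e
  | ML M => match c with 0 => msub (nsub G k) B | S c' => ML (mpa c' (S k) M B) end
  | MV i => MA 0 G B
  end.

Fixpoint redf (j : nat) (F G : mt) : mt :=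
  match F with
  | MA l M e => MA l (redf (S j) M G) e
  | ML M => match j with
            | 0 => MA 0 F G
            | S 0 => mpa 0 0 G M
            | S (S j') => ML (redf (S j') M (mren S G))
            end
  | MV i => MA 0 F G
  end.

Fixpoint dev (P : nat -> bool) (M : mt) : mt :=
  match M with
  | MV i => MV i
  | ML M => ML (dev P M)
  | MA l M N => if P l then redf 1 (dev P M) (dev P N) else MA l (dev P M) (dev P N)
  end.

Inductive st := San (d : nat) | Sfs (d : nat) | Sfx (k d : nat) | Snd (k d n : nat) | Sev (d n : nat).

Inductive W : st -> mt -> Prop :=
| W_an0 : forall b, W (San 0) (ML b)
| W_anA : forall d l M e, W (San (S d)) M -> W (San d) (MA l M e)
| W_anL : forall d M, W (San d) M -> W (San (S d)) (ML M)
| W_fsA : forall d l M e, W (Sfs (S (S d))) M -> W (Sfs (S d)) (MA l M e)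
| W_fsL : forall d M, W (Sfs (S d)) M -> W (Sfs (S (S d))) (ML M)
| W_fs1 : forall B, W (Sfs 1) (ML B)
| W_fxA : forall k d l M e, W (Sfx k (S (S d))) M -> W (Sfx k (S d)) (MA l M e)
| W_fxL : forall k d M, W (Sfx k (S d)) M -> W (Sfx k (S (S d))) (ML M)
| W_fx1 : forall k B, W (Snd k 0 0) B -> W (Sfx k 1) (ML B)
| W_ndA : forall k d n l M e, W (Snd k (S d) n) M -> W (Snd k d n) (MA l M e)
| W_ndL : forall k d n M, W (Snd k d (S n)) M -> W (Snd k (S d) n) (ML M)
| W_ndB : forall k n M, W (Snd k 0 (S n)) M -> W (Snd (S k) 0 n) (ML M)
| W_ndE : forall k n M, W (Sev 0 n) M -> W (Snd k 0 n) M
| W_evV : forall d n, W (Sev d n) (MV n)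
| W_evA : forall d n l M e, W (Sev (S d) n) M -> W (Sev d n) (MA l M e)
| W_evL : forall d n M, W (Sev d (S n)) M -> W (Sev (S d) n) (ML M)
| W_evF : forall d n l F G, W (Sfx d 1) F -> W (Sev 0 n) G -> W (Sev d n) (MA l F G).

Inductive st_map (s : nat -> mt) : st -> st -> Prop :=
| sm_an : forall d, st_map s (San d) (San d)
| sm_fs : forall d, st_map s (Sfs d) (Sfs d)
| sm_fx : forall k d, st_map s (Sfx k d) (Sfx k d)
| sm_nd : forall k d n n', s n = MV n' -> st_map s (Snd k d n) (Snd k d n')
| sm_ev : forall d n n', s n = MV n' -> st_map s (Sev d n) (Sev d n').

Lemma W_msub : forall st0 M, W st0 M -> forall s st1, st_map s st0 st1 -> W st1 (msub s M).
Proof.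
  induction 1; intros s st1 Hm; inversion Hm; subst; simpl;
  repeat match goal with H : s _ = MV _ |- _ => rewrite ?H end;
  try (econstructor; solve [first [apply IHW | apply IHW1 | apply IHW2]; econstructor; simpl;
       repeat match goal with H : s _ = MV _ |- _ => rewrite H end; reflexivity]).
  all: try (econstructor; fail).
  all: try (econstructor; [apply IHW1; constructor | apply IHW2; constructor; auto]).
Qed.

Fixpoint upsn (k : nat) (s : nat -> mt) : nat -> mt :=
  match k with 0 => s | S k => mup (upsn k s) end.

Lemma upsn_hi : forall k s j, upsn k s (j + k) = mren (fun i => i + k) (s j).
Proof.
  induction k; intros; simpl.
  - replace (j+0) with j by lia. rewrite mren_as_msub.
    transitivity (msub MV (s j)). symmetry; apply msub_id. apply msub_ext; intros; f_equal; lia.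
  - replace (j + S k) with (S (j + k)) by lia. simpl. rewrite IHk, mren_mren.
    apply mren_ext; intros; lia.
Qed.

Lemma upsn_lo : forall k s i, i < k -> upsn k s i = MV i.
Proof.
  induction k; intros; simpl. lia. destruct i; simpl; auto.
  rewrite IHk by lia. reflexivity.
Qed.

Lemma W_mren : forall st0 M xi, W st0 M ->
  match st0 with Snd k d n => W (Snd k d (xi n)) (mren xi M)
  | Sev d n => W (Sev d (xi n)) (mren xi M) | _ => W st0 (mren xi M) end.
Proof.
  intros. rewrite mren_as_msub. destruct st0; eapply W_msub; eauto; constructor; auto.
Qed.

Lemma W_an_mren : forall d M xi, W (San d) M -> W (San d) (mren xi M).
Proof. intros. apply (W_mren _ _ xi H). Qed.
Lemma W_an_msub : forall d M s, W (San d) M -> W (San d) (msub s M).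
Proof. intros. eapply W_msub; eauto. constructor. Qed.
Lemma W_fs_msub : forall d M s, W (Sfs d) M -> W (Sfs d) (msub s M).
Proof. intros. eapply W_msub; eauto. constructor. Qed.
Lemma W_fs_mren : forall d M xi, W (Sfs d) M -> W (Sfs d) (mren xi M).
Proof. intros. apply (W_mren _ _ xi H). Qed.

Lemma mpa_msub : forall c G, W (San c) G -> forall k B s,
  msub (upsn k s) (mpa c k G B) = mpa c k (msub (upsn k s) G) (msub (mup s) B).
Proof.
  intros c G H; remember (San c) as x; revert c Heqx.
  induction H; intros c0 Heq; inversion Heq; subst; intros; simpl.
  - rewrite !msub_msub. apply msub_ext. intros [|j]; simpl; auto.
    rewrite upsn_hi, msub_mren. simpl. rewrite mren_as_msub. apply msub_ext; auto.
  - f_equal. apply IHW; auto.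
  - f_equal. apply (IHW d eq_refl (S k)).
Qed.

Lemma msub_mup_mren : forall G s, msub (mup s) (mren S G) = mren S (msub s G).
Proof. intros. rewrite msub_mren, mren_msub. apply msub_ext; auto. Qed.

Lemma redf_msub : forall j F, W (Sfs j) F -> forall G s, W (San 0) G ->
  msub s (redf j F G) = redf j (msub s F) (msub s G).
Proof.
  intros j F H; remember (Sfs j) as x; revert j Heqx.
  induction H; intros j0 Heq; inversion Heq; subst; intros; simpl.
  - f_equal. apply IHW; auto.
  - f_equal. rewrite IHW; auto. f_equal. apply msub_mup_mren. apply W_an_mren; auto.
  - apply (mpa_msub 0 G H 0).
Qed.

Lemma redf_mren : forall j F G xi, W (Sfs j) F -> W (San 0) G ->
  mren xi (redf j F G) = redf j (mren xi F) (mren xi G).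
Proof. intros. rewrite !mren_as_msub. apply redf_msub; auto. Qed.

Lemma um_mpa : forall G c k B, um (mpa c k G B) = mpa c k (um G) (um B).
Proof.
  induction G; intros; simpl; auto.
  destruct c; simpl; auto.
  - rewrite um_msub. apply msub_ext. intros [|i]; simpl; auto.
  - f_equal; auto.
  - f_equal; auto.
Qed.

Lemma um_redf : forall F j G, um (redf j F G) = redf j (um F) (um G).
Proof.
  induction F; intros; simpl; auto.
  - destruct j as [|[|j]]; simpl; auto. apply um_mpa. f_equal. rewrite IHF, um_mren. auto.
  - f_equal; auto.
Qed.

Lemma C7 : forall c S0, W (San c) S0 -> forall v k1 k m B,
  msub (upsn m (nsub v k1)) (mpa c (S k + m) S0 B) =
  mpa c (k + k1 + m) (msub (upsn m (nsub v k1)) S0) B.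
Proof.
  intros c S0 H; remember (San c) as x; revert c Heqx.
  induction H; intros c0 Heq; inversion Heq; subst; intros; simpl.
  - rewrite msub_msub. apply msub_ext. intros [|j]; simpl; auto.
    replace (j + S (k + m)) with ((S (j + k)) + m) by lia.
    rewrite upsn_hi. simpl. f_equal. lia.
  - f_equal. apply IHW; auto.
  - f_equal. replace (S (S (k + m))) with (S k + S m) by lia.
    replace (S (k + k1 + m)) with (k + k1 + S m) by lia.
    apply (IHW d eq_refl v k1 k (S m)).
Qed.

Lemma C6g : forall c1 e, W (San c1) e -> forall c S0 k k1 B, W (San c) S0 ->
  mpa (c + c1) (k + k1) (mpa c1 k1 e S0) B = mpa c1 k1 e (mpa c (S k) S0 B).
Proof.
  intros c1 e H; remember (San c1) as x; revert c1 Heqx.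
  induction H; intros c0 Heq; inversion Heq; subst; intros; simpl.
  - replace (c + 0) with c by lia.
    pose proof (C7 c S0 H (ML b) k1 k 0 B) as E. simpl in E.
    replace (S (k + 0)) with (S k) in E by lia. replace (k + k1 + 0) with (k + k1) in E by lia.
    rewrite E. reflexivity.
  - f_equal. rewrite <- Nat.add_succ_r. apply IHW; auto.
  - rewrite Nat.add_succ_r. simpl. f_equal.
    replace (S (k + k1)) with (k + S k1) by lia. apply IHW; auto.
Qed.

Lemma C6 : forall e S0 c k B, W (San 0) e -> W (San c) S0 ->
  mpa c k (mpa 0 0 e S0) B = mpa 0 0 e (mpa c (S k) S0 B).
Proof.
  intros. pose proof (C6g 0 e H c S0 k 0 B H0). rewrite !Nat.add_0_r in H1. auto.
Qed.

Lemma C5 : forall j M, W (Sfs j) M -> forall c k B e, W (San (j + c)) M -> W (San 0) e ->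
  redf j (mpa (j + c) k M B) e = mpa (j + c - 1) k (redf j M e) B.
Proof.
  intros j M H; remember (Sfs j) as x; revert j Heqx.
  induction H; intros j0 Heq; inversion Heq; subst; intros; simpl.
  - inversion H0; subst. f_equal.
    replace (S (S (d + c))) with (S (S d) + c) by lia.
    rewrite IHW; auto. f_equal. lia.
  - inversion H0; subst. simpl. f_equal.
    replace (S (d + c)) with (S d + c) by lia.
    rewrite IHW; auto. f_equal. lia.
    replace (S d + c) with (S (d+c)) by lia; auto.
    apply W_an_mren; auto.
  - inversion H; subst. replace (c - 0) with c by lia.
    symmetry. apply C6; auto.
Qed.

Lemma mren_id : forall M, mren (fun i => i) M = M.
Proof. intros. rewrite mren_as_msub. apply msub_id. Qed.

Lemma C4 : forall c e, W (San c) e -> forall k S0 d G0, W (Sfs d) S0 -> W (San 0) G0 -> 1 <= d ->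
  redf (d + c) (mpa c k e S0) (mren (fun i => i + k) G0) = mpa c k e (redf d S0 (mren S G0)).
Proof.
  intros c e H; remember (San c) as x; revert c Heqx.
  induction H; intros c0 Heq; inversion Heq; subst; intros; simpl.
  - rewrite Nat.add_0_r. rewrite redf_msub; auto. f_equal.
    rewrite msub_mren. rewrite mren_as_msub. apply msub_ext; intros; simpl; auto.
    apply W_an_mren; auto.
  - f_equal. rewrite <- Nat.add_succ_r. apply IHW; auto.
  - destruct d0 as [|d0]. lia. replace (S d0 + S d) with (S (S (d0 + d))) by lia. simpl. f_equal.
    replace (S (d0 + d)) with (S d0 + d) by lia.
    rewrite mren_mren. rewrite <- IHW; auto. f_equal. apply mren_ext. intros; lia.
Qed.

Lemma C2 : forall j M, W (Sfs j) M -> forall d G e, 1 <= d -> W (Sfs (j + d)) M ->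
  W (San 0) G -> W (San 0) e ->
  redf j (redf (j + d) M G) e = redf (j + d - 1) (redf j M e) G.
Proof.
  intros j M H; remember (Sfs j) as x; revert j Heqx.
  induction H; intros j0 Heq; inversion Heq; subst; intros; simpl.
  - inversion H1; subst. f_equal.
    replace (S (S (d + d0))) with (S (S d) + d0) by lia.
    rewrite IHW; auto. replace (S (S d) + d0 - 1) with (S (S d + d0 - 1)) by lia. reflexivity.
  - inversion H1; subst. simpl.
    replace (d + d0) with (S (d + d0 - 1)) by lia. simpl. f_equal.
    replace (S (S (d + d0 - 1))) with (S d + d0) by lia.
    rewrite IHW; auto. f_equal. lia.
    replace (S d + d0) with (S (d + d0)) by lia. auto.
    apply W_an_mren; auto. apply W_an_mren; auto.
  - destruct d as [|d]. lia. simpl. inversion H0; subst.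
    pose proof (C4 0 e H2 0 B (S d) G H5 H1) as E.
    rewrite Nat.add_0_r in E. replace (mren (fun i : nat => i + 0) G) with G in E.
    rewrite E by lia. replace (S d - 0) with (S d) by lia. reflexivity.
    rewrite <- (mren_id G) at 1. apply mren_ext. intros; lia.
Qed.

Definition setdn (u : st) (c m : nat) : st :=
  match u with
  | San d => San (c + d) | Sfs d => Sfs (c + d) | Sfx k d => Sfx k (c + d)
  | Snd k d _ => Snd k (c + d) m | Sev d _ => Sev (c + d) m
  end.

Definition stok (u : st) : Prop :=
  match u with Sfs d => 1 <= d | Sfx _ d => 1 <= d | _ => True end.

Lemma W_stok : forall u M, W u M -> stok u.
Proof. induction 1; simpl; auto; lia. Qed.

Lemma MP : forall c a, W (San c) a -> forall k B u n0, W (setdn u 0 (S n0)) B ->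
  W (setdn u c (k + n0)) (mpa c k a B).
Proof.
  intros c a H; remember (San c) as x; revert c Heqx.
  induction H; intros c0 Heq; inversion Heq; subst; intros k B0 u n0 HB; simpl.
  - eapply W_msub; eauto. destruct u; simpl; constructor; simpl; f_equal; lia.
  - assert (stok (setdn u 0 (S n0))) by (eapply W_stok; eauto).
    specialize (IHW _ eq_refl k B0 u n0 HB).
    destruct u; simpl in *.
    + apply W_anA; auto.
    + replace (c0 + d) with (S (c0 + d - 1)) by lia. apply W_fsA.
      replace (S (S (c0 + d - 1))) with (S (c0 + d)) by lia. auto.
    + replace (c0 + d) with (S (c0 + d - 1)) by lia. apply W_fxA.
      replace (S (S (c0 + d - 1))) with (S (c0 + d)) by lia. auto.
    + apply W_ndA; auto.
    + apply W_evA; auto.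
  - assert (stok (setdn u 0 (S n0))) by (eapply W_stok; eauto).
    specialize (IHW _ eq_refl (S k) B0 u n0 HB).
    replace (S k + n0) with (S (k + n0)) in IHW by lia.
    destruct u; simpl in *.
    + apply W_anL; auto.
    + replace (S (d + d0)) with (S (S (d + d0 - 1))) by lia. apply W_fsL.
      replace (S (d + d0 - 1)) with (d + d0) by lia. auto.
    + replace (S (d + d0)) with (S (S (d + d0 - 1))) by lia. apply W_fxL.
      replace (S (d + d0 - 1)) with (d + d0) by lia. auto.
    + apply W_ndL; auto.
    + apply W_evL; auto.
Qed.

Definition units (t : st) : nat :=
  match t with San d => d | Sfs d => d | Sfx k d => d + k | Snd k d _ => d + k | Sev d _ => d end.

Definition dec (m : nat) (t : st) : st :=
  match t with
  | San d => San (pred d) | Sfs d => Sfs (pred d)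
  | Sfx k d => if m <? d then Sfx k (pred d) else Sfx (pred k) d
  | Snd k d n => if m <? d then Snd k (pred d) n else Snd (pred k) d n
  | Sev d n => Sev (pred d) n
  end.

Definition decp (m : nat) (t : st) : st := if m <? units t then dec m t else t.

Definition okm (m : nat) (t : st) : Prop :=
  match t with San d => m < d | Sfs d => S m < d \/ d <= m | Sfx k d => S m <> d | _ => True end.

Ltac dlt := repeat match goal with
  | |- context[?x <? ?y] => destruct (Nat.ltb_spec0 x y)
  | H : context[?x <? ?y] |- _ => destruct (Nat.ltb_spec0 x y) end; simpl in *.

Lemma Phi : forall t M, W t M -> forall j a, W (Sfs j) M -> W (San 0) a -> 1 <= j ->
  okm (j-1) t -> W (decp (j-1) t) (redf j M a).
Proof.
  induction 1; intros j a HF Ha Hj Hok; simpl in Hok.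
  - lia.
  - inversion HF; subst. simpl. unfold decp; simpl. dlt; try lia.
    specialize (IHW _ a ltac:(eassumption) Ha ltac:(lia) ltac:(simpl; lia)).
    unfold decp in IHW; simpl in IHW. dlt; try lia.
    destruct d; [lia|]. apply W_anA. auto.
  - destruct j as [|[|j]]; [lia| |].
    + simpl. unfold decp; simpl. apply (MP 0 a Ha 0 M (San d) 0). auto.
    + inversion HF; subst. simpl. unfold decp; simpl. dlt; try lia.
      specialize (IHW _ (mren S a) ltac:(eassumption) (W_an_mren _ _ _ Ha) ltac:(lia) ltac:(simpl; lia)).
      unfold decp in IHW; simpl in IHW. dlt; try lia.
      destruct d; [lia|]. apply W_anL. replace (j - 0) with j in IHW by lia. auto.
  - inversion HF; subst. simpl.
    specialize (IHW _ a ltac:(eassumption) Ha ltac:(lia) ltac:(simpl; lia)).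
    unfold decp in IHW; unfold decp; simpl in *. dlt; try lia.
    all: first [apply W_fsA; auto | destruct d as [|d]; [lia|]; apply W_fsA; auto].
  - destruct j as [|[|j]]; [lia| |].
    + simpl. unfold decp; simpl. dlt; try lia. apply (MP 0 a Ha 0 M (Sfs (S d)) 0). auto.
    + inversion HF; subst. simpl.
      specialize (IHW _ (mren S a) ltac:(eassumption) (W_an_mren _ _ _ Ha) ltac:(lia) ltac:(simpl; lia)).
      unfold decp in IHW; unfold decp; simpl in *. replace (j - 0) with j in IHW by lia. dlt; try lia.
      all: first [apply W_fsL; auto | destruct d as [|d]; [lia|]; apply W_fsL; auto].
  - destruct j as [|[|j]]; try lia. simpl. unfold decp; simpl. dlt; try lia. apply W_fs1.
  - inversion HF; subst. simpl. unfold decp; simpl.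
    specialize (IHW _ a ltac:(eassumption) Ha ltac:(lia) ltac:(simpl; lia)).
    unfold decp in IHW; simpl in IHW. dlt; try lia; simpl in *; dlt; try lia.
    + destruct d as [|d]; [lia|]. apply W_fxA. auto.
    + apply W_fxA. auto.
    + apply W_fxA. auto.
  - destruct j as [|[|j]]; [lia| |].
    + simpl. unfold decp; simpl. dlt; try lia.
      apply (MP 0 a Ha 0 M (Sfx k (S d)) 0). auto.
    + inversion HF; subst. simpl. unfold decp; simpl.
      specialize (IHW _ (mren S a) ltac:(eassumption) (W_an_mren _ _ _ Ha) ltac:(lia) ltac:(simpl; lia)).
      unfold decp in IHW; simpl in IHW. replace (j - 0) with j in IHW by lia.
      dlt; try lia; simpl in *; dlt; try lia.
      * destruct d as [|d]; [lia|]. apply W_fxL. auto.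
      * apply W_fxL. auto.
      * apply W_fxL. auto.
  - destruct j as [|[|j]]; [lia|lia|].
    inversion HF; subst. simpl. unfold decp; simpl.
    specialize (IHW _ (mren S a) ltac:(eassumption) (W_an_mren _ _ _ Ha) ltac:(lia) I).
    unfold decp in IHW; simpl in IHW. replace (j - 0) with j in IHW by lia.
    dlt; try lia; simpl in *; dlt; try lia; apply W_fx1; auto.
  - inversion HF; subst. simpl. unfold decp; simpl.
    specialize (IHW _ a ltac:(eassumption) Ha ltac:(lia) I).
    unfold decp in IHW; simpl in IHW. dlt; try lia; simpl in *; dlt; try lia.
    + destruct d as [|d]; [lia|]. apply W_ndA. auto.
    + apply W_ndA. auto.
    + apply W_ndA. auto.
  - destruct j as [|[|j]]; [lia| |].
    + simpl. unfold decp; simpl. dlt; try lia.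
      apply (MP 0 a Ha 0 M (Snd k d 0) n). auto.
    + inversion HF; subst. simpl. unfold decp; simpl.
      specialize (IHW _ (mren S a) ltac:(eassumption) (W_an_mren _ _ _ Ha) ltac:(lia) I).
      unfold decp in IHW; simpl in IHW. replace (j - 0) with j in IHW by lia.
      dlt; try lia; simpl in *; dlt; try lia.
      * destruct d as [|d]; [lia|]. apply W_ndL. auto.
      * apply W_ndL. auto.
      * apply W_ndL. auto.
  - destruct j as [|[|j]]; [lia| |].
    + simpl. unfold decp; simpl. dlt; try lia.
      apply (MP 0 a Ha 0 M (Snd k 0 0) n). auto.
    + inversion HF; subst. simpl. unfold decp; simpl.
      specialize (IHW _ (mren S a) ltac:(eassumption) (W_an_mren _ _ _ Ha) ltac:(lia) I).
      unfold decp in IHW; simpl in IHW. replace (j - 0) with j in IHW by lia.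
      dlt; try lia; simpl in *; dlt; try lia.
      * destruct k as [|k]; [lia|]. apply W_ndB. auto.
      * apply W_ndB. auto.
  - specialize (IHW j a HF Ha Hj I).
    unfold decp in IHW; simpl in IHW. dlt; try lia.
    unfold decp; simpl; dlt; simpl; dlt; try lia; apply W_ndE; auto.
  - inversion HF.
  - inversion HF; subst. simpl. unfold decp; simpl.
    specialize (IHW _ a ltac:(eassumption) Ha ltac:(lia) I).
    unfold decp in IHW; simpl in IHW. dlt; try lia; simpl in *.
    + destruct d as [|d]; [lia|]. apply W_evA. auto.
    + apply W_evA. auto.
  - destruct j as [|[|j]]; [lia| |].
    + simpl. unfold decp; simpl. dlt; try lia.
      apply (MP 0 a Ha 0 M (Sev d 0) n). auto.
    + inversion HF; subst. simpl. unfold decp; simpl.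
      specialize (IHW _ (mren S a) ltac:(eassumption) (W_an_mren _ _ _ Ha) ltac:(lia) I).
      unfold decp in IHW; simpl in IHW. replace (j - 0) with j in IHW by lia.
      dlt; try lia; simpl in *.
      * destruct d as [|d]; [lia|]. apply W_evL. auto.
      * apply W_evL. auto.
  - inversion HF; subst. simpl.
    specialize (IHW1 _ a ltac:(eassumption) Ha ltac:(lia) ltac:(simpl; lia)).
    unfold decp in IHW1; simpl in IHW1. unfold decp; simpl.
    dlt; try lia; simpl in *; dlt; try lia; apply W_evF; auto.
Qed.

Lemma W_mono : forall t M, W t M ->
  match t with
  | Sfx k d => forall k', k <= k' -> W (Sfx k' d) M
  | Snd k d n => forall k', k <= k' -> W (Snd k' d n) M
  | Sev d n => forall d', d <= d' -> W (Sev d' n) M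
  | _ => True end.
Proof.
  induction 1; intros; auto.
  - apply W_fxA. apply IHW; auto.
  - apply W_fxL. apply IHW; auto.
  - apply W_fx1. apply IHW; auto.
  - apply W_ndA. apply IHW; auto.
  - apply W_ndL. apply IHW; auto.
  - destruct k'. lia. apply W_ndB. apply IHW. lia.
  - apply W_ndE. auto.
  - apply W_evV.
  - apply W_evA. apply IHW. lia.
  - destruct d'. lia. apply W_evL. apply IHW. lia.
  - apply W_evF. apply IHW1; auto. apply IHW2; lia.
Qed.

Definition notan (t : st) : Prop := match t with San _ => False | _ => True end.

Lemma Psi : forall c a, W (San c) a -> forall t k B, W t a -> notan t -> units t <= c ->
  W t (mpa c k a B).
Proof.
  intros c a H; remember (San c) as x; revert c Heqx.
  induction H; intros c0 Heq; inversion Heq; subst; intros t k0 B0 Hw Hn Hu; simpl in *.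
  - inversion Hw; subst; simpl in *; try contradiction; try lia.
    inversion H.
  - inversion Hw; subst; simpl in *; try contradiction.
    + constructor. apply IHW; auto; simpl; lia.
    + constructor. apply IHW; auto; simpl; lia.
    + constructor. apply IHW; auto; simpl; lia.
    + apply W_ndE. inversion H0; subst.
      * apply W_evA. apply IHW; auto; simpl; lia.
      * apply W_evF. apply IHW; auto; simpl; lia. auto.
    + apply W_evA. apply IHW; auto; simpl; lia.
    + apply W_evF. apply IHW; auto; simpl; lia. auto.
  - inversion Hw; subst; simpl in *; try contradiction.
    + constructor. apply IHW; auto; simpl; lia.
    + constructor.
    + constructor. apply IHW; auto; simpl; lia.
    + constructor. apply IHW; auto; simpl; lia.
    + constructor. apply IHW; auto; simpl; lia.
    + constructor. apply IHW; auto; simpl; lia.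
    + inversion H0.
    + constructor. apply IHW; auto; simpl; lia.
Qed.

Lemma FA : forall c a, W (San c) a -> forall n k B d, W (Sev c n) a ->
  W (Sev (d + c) n) (mpa c k a B).
Proof.
  intros c a H; remember (San c) as x; revert c Heqx.
  induction H; intros c0 Heq; inversion Heq; subst; intros n k B0 d0 Hw; simpl.
  - inversion Hw.
  - inversion Hw; subst.
    + apply W_evA. replace (S (d0 + c0)) with (d0 + S c0) by lia. apply IHW; auto.
    + apply W_evF; auto.
      assert (W (Sfx c0 1) (mpa (S c0) k M B0)) by (apply Psi; simpl; auto; lia).
      apply (W_mono _ _ H0). lia.
  - inversion Hw; subst. replace (d0 + S d) with (S (d0 + d)) by lia.
    apply W_evL. apply IHW; auto.
Qed.

Lemma EVS : forall j f, W (Sfs j) f -> forall a n d, W (San 0) a -> W (Sev 0 n) a ->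
  W (Sev (d + (j-1)) n) (redf j f a).
Proof.
  intros j f H; remember (Sfs j) as x; revert j Heqx.
  induction H; intros j0 Heq; inversion Heq; subst; intros a n d0 Ha Hw; simpl.
  - apply W_evA. replace (S (d0 + (d - 0))) with (d0 + (S (S d) - 1)) by lia. apply IHW; auto.
  - replace (d0 + S d) with (S (d0 + (S d - 1))) by lia. apply W_evL. apply IHW; auto.
    apply W_an_mren; auto. apply (W_mren _ _ S Hw).
  - exact (FA 0 a Ha n 0 B d0 Hw).
Qed.

Lemma WL : forall s M, W s M -> forall l f a, M = MA l f a -> W (Sfs 1) f -> W (San 0) a ->
  W s (redf 1 f a).
Proof.
  induction 1; intros l0 f a HM Hf Ha; try discriminate; inversion HM; subst.
  - pose proof (Phi _ _ H 1 a Hf Ha ltac:(lia) ltac:(simpl; lia)). unfold decp in H0; simpl in H0.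
    dlt; try lia. auto.
  - pose proof (Phi _ _ H 1 a Hf Ha ltac:(lia) ltac:(simpl; lia)). unfold decp in H0; simpl in H0.
    dlt; try lia. auto.
  - pose proof (Phi _ _ H 1 a Hf Ha ltac:(lia) ltac:(simpl; lia)). unfold decp in H0; simpl in H0.
    dlt; try lia. auto.
  - pose proof (Phi _ _ H 1 a Hf Ha ltac:(lia) I). unfold decp in H0; simpl in H0.
    dlt; try lia. auto.
  - apply W_ndE. eapply IHW; eauto.
  - pose proof (Phi _ _ H 1 a Hf Ha ltac:(lia) I). unfold decp in H0; simpl in H0.
    dlt; try lia. auto.
  - pose proof (EVS 1 f Hf a n d Ha H0). rewrite Nat.add_0_r in H1. auto.
Qed.

Inductive mstep (P : nat -> bool) : mt -> mt -> Prop :=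
| ms_root : forall l F G, P l = true -> W (Sfs 1) F -> W (San 0) G -> mstep P (MA l F G) (redf 1 F G)
| ms_lam : forall M M', mstep P M M' -> mstep P (ML M) (ML M')
| ms_appL : forall l M M' N, mstep P M M' -> mstep P (MA l M N) (MA l M' N)
| ms_appR : forall l M N N', mstep P N N' -> mstep P (MA l M N) (MA l M N').

Lemma WS : forall P M M', mstep P M M' -> forall s, W s M -> W s M'.
Proof.
  induction 1; intros s Hw.
  - eapply WL; eauto.
  - inversion Hw; subst; try (constructor; auto; fail). inversion H0.
  - inversion Hw; subst; try (constructor; auto; fail).
    all: try (apply W_ndE; inversion H0; subst; [apply W_evA; auto | apply W_evF; auto]).
    all: try (apply W_evF; auto).
  - inversion Hw; subst; try (constructor; auto; fail).
    all: try (apply W_ndE; inversion H0; subst; [apply W_evA; auto | apply W_evF; auto]).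
    all: try (apply W_evF; auto).
Qed.

Fixpoint wm (M : mt) : Prop :=
  match M with
  | MV _ => True
  | ML M => wm M
  | MA l M N => wm M /\ wm N /\ (l <> 0 -> W (Sfs 1) M /\ W (San 0) N)
  end.



Lemma wm_mren : forall M xi, wm M -> wm (mren xi M).
Proof.
  induction M; intros; simpl in *; auto.
  destruct H as [H1 [H2 H3]]. repeat split; auto.
  - apply W_fs_mren. apply H3; auto.
  - apply W_an_mren. apply H3; auto.
Qed.

Lemma wm_msub : forall M s, wm M -> (forall i, wm (s i)) -> wm (msub s M).
Proof.
  induction M; intros; simpl in *; auto.
  - apply IHM; auto. intros [|i]; simpl; auto. apply wm_mren; auto.
  - destruct H as [H1 [H2 H3]]. repeat split; auto.
    + apply W_fs_msub. apply H3; auto.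
    + apply W_an_msub. apply H3; auto.
Qed.

Lemma wm_mpa : forall c G, W (San c) G -> forall k B, wm G -> wm B -> wm (mpa c k G B).
Proof.
  intros c G H; remember (San c) as x; revert c Heqx.
  induction H; intros c0 Heq; inversion Heq; subst; intros; simpl in *.
  - apply wm_msub; auto. intros [|i]; simpl; auto.
  - destruct H0 as [H2 [H3 H4]]. split; [|split]; try (apply (IHW _ eq_refl); auto); auto.
    intros Hl. split. apply Psi; simpl; auto. apply H4; auto. lia. apply H4; auto.
  - apply (IHW _ eq_refl); auto.
Qed.

Lemma wm_redf : forall j F, W (Sfs j) F -> forall G, wm F -> wm G -> W (San 0) G -> wm (redf j F G).
Proof.
  intros j F H; remember (Sfs j) as x; revert j Heqx.
  induction H; intros j0 Heq; inversion Heq; subst; intros; simpl in *.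
  - destruct H0 as [H3 [H4 H5]]. split; [|split]; try (apply (IHW _ eq_refl); auto); auto.
    intros Hl. specialize (H5 Hl). destruct H5. split; auto.
      pose proof (Phi _ _ H0 (S (S d)) G H H2 ltac:(lia) ltac:(simpl; lia)).
      unfold decp in H6; simpl in H6. dlt; try lia. auto.
  - apply (IHW _ eq_refl); auto. apply wm_mren; auto. apply W_an_mren; auto.
  - apply wm_mpa; auto.
Qed.

Lemma wm_mstep : forall P M M', mstep P M M' -> wm M -> wm M'.
Proof.
  induction 1; intros; simpl in *.
  - destruct H2 as [H3 [H4 _]]. apply wm_redf; auto.
  - auto.
  - destruct H0 as [H1 [H2 H3]]. split; [|split]; auto. intros Hl; destruct (H3 Hl); split; auto.
    eapply WS; eauto.
  - destruct H0 as [H1 [H2 H3]]. split; [|split]; auto. intros Hl; destruct (H3 Hl); split; auto.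
    eapply WS; eauto.
Qed.

Definition msteps P := clos_refl_trans mt (mstep P).

Lemma msteps_W : forall P M M', msteps P M M' -> forall s, W s M -> W s M'.
Proof. induction 1; intros; eauto. eapply WS; eauto. Qed.

Lemma msteps_wm : forall P M M', msteps P M M' -> wm M -> wm M'.
Proof. induction 1; intros; eauto. eapply wm_mstep; eauto. Qed.

Lemma msteps_lam : forall P M M', msteps P M M' -> msteps P (ML M) (ML M').
Proof. induction 1. apply rt_step; constructor; auto. apply rt_refl. eapply rt_trans; eauto. Qed.
Lemma msteps_appL : forall P l M M' N, msteps P M M' -> msteps P (MA l M N) (MA l M' N).
Proof. induction 1. apply rt_step; constructor; auto. apply rt_refl. eapply rt_trans; eauto. Qed.
Lemma msteps_appR : forall P l M N N', msteps P N N' -> msteps P (MA l M N) (MA l M N').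
Proof. induction 1. apply rt_step; constructor; auto. apply rt_refl. eapply rt_trans; eauto. Qed.

Lemma msteps_dev : forall P, P 0 = false -> forall M, wm M -> msteps P M (dev P M).
Proof.
  intros P HP0. induction M; intros Hw; simpl in *.
  - apply rt_refl.
  - apply msteps_lam; auto.
  - destruct Hw as [H1 [H2 H3]].
    assert (msteps P (MA n M1 M2) (MA n (dev P M1) (dev P M2))).
    { eapply rt_trans. apply msteps_appL; eauto. apply msteps_appR; eauto. }
    destruct (P n) eqn:E; auto.
    eapply rt_trans; eauto. apply rt_step. constructor; auto.
    + eapply msteps_W. apply IHM1; auto. apply H3. intro; subst; congruence.
    + eapply msteps_W. apply IHM2; auto. apply H3. intro; subst; congruence.
Qed.

Lemma W_dev : forall P, P 0 = false -> forall M s, wm M -> W s M -> W s (dev P M).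
Proof. intros. eapply msteps_W; eauto. apply msteps_dev; auto. Qed.

Lemma dev_mren : forall P, P 0 = false -> forall M xi, wm M -> dev P (mren xi M) = mren xi (dev P M).
Proof.
  intros P HP0. induction M; intros xi Hw; simpl in *; auto.
  - f_equal; auto.
  - destruct Hw as [H1 [H2 H3]]. rewrite IHM1, IHM2 by auto.
    destruct (P n) eqn:E; auto.
    assert (n <> 0) by (intro; subst; congruence).
    destruct (H3 H).
    rewrite redf_mren; auto; apply W_dev; auto.
Qed.

Lemma dev_msub : forall P, P 0 = false -> forall M s, wm M -> (forall i, wm (s i)) ->
  dev P (msub s M) = msub (fun i => dev P (s i)) (dev P M).
Proof.
  intros P HP0. induction M; intros s Hw Hs; simpl in *; auto.
  - f_equal. rewrite IHM; auto.
    + apply msub_ext. intros [|i]; simpl; auto. apply dev_mren; auto.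
    + intros [|i]; simpl; auto. apply wm_mren; auto.
  - destruct Hw as [H1 [H2 H3]]. rewrite IHM1, IHM2 by auto.
    destruct (P n) eqn:E; auto.
    assert (n <> 0) by (intro; subst; congruence).
    destruct (H3 H).
    rewrite redf_msub; auto; apply W_dev; auto.
Qed.

Lemma C1' : forall P, P 0 = false -> forall c G, W (San c) G -> wm G -> forall k B, wm B ->
  dev P (mpa c k G B) = mpa c k (dev P G) (dev P B).
Proof.
  intros P HP0 c G H; remember (San c) as x; revert c Heqx.
  induction H; intros c0 Heq; inversion Heq; subst; intros; simpl in *.
  - rewrite dev_msub; auto.
    + apply msub_ext. intros [|i]; simpl; auto.
    + intros [|i]; simpl; auto.
  - destruct H0 as [H2 [H3 H4]]. rewrite (IHW _ eq_refl) by auto.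
    destruct (P l) eqn:E; auto.
    assert (l <> 0) by (intro; subst; congruence). destruct (H4 H0).
    pose proof (C5 1 (dev P M) (W_dev P HP0 _ _ H2 H5) c0 k (dev P B) (dev P e)) as E5.
    simpl in E5. rewrite E5; auto. replace (c0 - 0) with c0 by lia. auto.
    apply W_dev; auto. apply W_dev; auto.
  - rewrite (IHW _ eq_refl) by auto. auto.
Qed.

Lemma C1 : forall P, P 0 = false -> forall j F, W (Sfs j) F -> wm F -> forall G, wm G -> W (San 0) G ->
  dev P (redf j F G) = redf j (dev P F) (dev P G).
Proof.
  intros P HP0 j F H; remember (Sfs j) as x; revert j Heqx.
  induction H; intros j0 Heq; inversion Heq; subst; intros; simpl in *.
  - destruct H0 as [H3 [H4 H5]]. rewrite (IHW _ eq_refl) by auto.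
    destruct (P l) eqn:E; auto.
    assert (l <> 0) by (intro; subst; congruence). destruct (H5 H0).
    pose proof (C2 1 (dev P M) (W_dev P HP0 _ _ H3 H6) (S d) (dev P G) (dev P e)) as E2.
    simpl in E2. rewrite E2; auto. lia.
    apply W_dev; auto. apply W_dev; auto. apply W_dev; auto.
  - rewrite (IHW _ eq_refl); auto. f_equal. f_equal. apply dev_mren; auto.
    apply wm_mren; auto. apply W_an_mren; auto.
  - apply C1'; auto.
Qed.

Lemma ss : forall P, P 0 = false -> forall M M', mstep P M M' -> wm M -> dev P M' = dev P M.
Proof.
  intros P HP0. induction 1; intros Hw; simpl in *.
  - destruct Hw as [H2 [H3 H4]]. rewrite H. apply C1; auto.
  - f_equal; auto.
  - destruct Hw as [H2 [H3 H4]]. rewrite IHmstep; auto.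
  - destruct Hw as [H2 [H3 H4]]. rewrite IHmstep; auto.
Qed.

Lemma ss_rt : forall P, P 0 = false -> forall M M', msteps P M M' -> wm M -> dev P M' = dev P M.
Proof.
  intros P HP0. induction 1; intros Hw; auto.
  - apply ss; auto.
  - rewrite IHclos_refl_trans2. apply IHclos_refl_trans1; auto. eapply msteps_wm; eauto.
Qed.

Fixpoint good (k : nat) (M : mt) : Prop :=
  match M with
  | MV _ => True
  | ML M => good (pred k) M
  | MA l M N => good (S k) M /\ good 0 N /\ (l <> 0 -> W (Sfx k 1) M /\ W (San 0) N)
  end.

Lemma fx_fs : forall t M, W t M -> match t with Sfx k d => W (Sfs d) M | _ => True end.
Proof. induction 1; auto; constructor; auto. Qed.

Lemma good_wm : forall M k, good k M -> wm M.
Proof.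
  induction M; intros; simpl in *; eauto.
  destruct H as [H1 [H2 H3]]. split; [|split]; eauto.
  intros Hl; destruct (H3 Hl); split; auto. apply (fx_fs _ _ H).
Qed.

Lemma good_mono : forall M k k', good k M -> k <= k' -> good k' M.
Proof.
  induction M; intros; simpl in *; auto.
  - apply IHM with (pred k); auto; lia.
  - destruct H as [H1 [H2 H3]]. split; [|split]; auto.
    + apply IHM1 with (S k); auto; lia.
    + intros Hl; destruct (H3 Hl); split; auto. apply (W_mono _ _ H). auto.
Qed.

Lemma good_mren : forall M k xi, good k M -> good k (mren xi M).
Proof.
  induction M; intros; simpl in *; auto.
  destruct H as [H1 [H2 H3]]. split; [|split]; auto.
  intros Hl; destruct (H3 Hl); split; auto.
  - apply (W_mren _ _ xi H).
  - apply W_an_mren; auto.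
Qed.

Lemma good_msub : forall M k s, good k M -> (forall i k', good k' (s i)) -> good k (msub s M).
Proof.
  induction M; intros; simpl in *; auto.
  - apply IHM; auto. intros [|i] k'; simpl; auto. apply good_mren; auto.
  - destruct H as [H1 [H2 H3]]. split; [|split]; auto.
    intros Hl; destruct (H3 Hl); split; auto.
    + eapply W_msub; eauto. constructor.
    + apply W_an_msub; auto.
Qed.

Lemma GM : forall c G, W (San c) G -> forall kk k' B, good c G -> good k' B ->
  good (k' + c) (mpa c kk G B).
Proof.
  intros c G H; remember (San c) as x; revert c Heqx.
  induction H; intros c0 Heq; inversion Heq; subst; intros; simpl in *.
  - rewrite Nat.add_0_r. apply good_msub; auto. intros [|i] k''; simpl; auto.
    apply good_mono with 0; auto; lia.
  - destruct H0 as [H2 [H3 H4]]. split; [|split]; auto.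
    + replace (S (k' + c0)) with (k' + S c0) by lia. apply (IHW _ eq_refl); auto.
    + intros Hl; destruct (H4 Hl); split; auto.
      assert (W (Sfx c0 1) (mpa (S c0) kk M B)) by (apply Psi; simpl; auto; lia).
      apply (W_mono _ _ H6). lia.
  - replace (pred (k' + S d)) with (k' + d) by lia. apply (IHW _ eq_refl); auto.
Qed.

Lemma GR : forall j F, W (Sfs j) F -> forall k G, good (k + j) F -> good 0 G -> W (San 0) G ->
  1 <= j -> good (k + j - 1) (redf j F G).
Proof.
  intros j F H; remember (Sfs j) as x; revert j Heqx.
  induction H; intros j0 Heq; inversion Heq; subst; intros; simpl in *.
  - destruct H0 as [H4 [H5 H6]]. split; [|split]; auto.
    + replace (S (k + S d - 1)) with (k + S (S d) - 1) by lia. apply (IHW _ eq_refl); auto.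
      replace (k + S (S d)) with (S (k + S d)) by lia. auto.
    + intros Hl; destruct (H6 Hl); split; auto.
      pose proof (Phi _ _ H0 (S (S d)) G H H2 ltac:(lia) ltac:(simpl; lia)).
      unfold decp in H8; simpl in H8. dlt; try lia.
      replace (k + S d - 1) with (pred (k + S d)) by lia. auto.
  - replace (pred (k + S (S d) - 1)) with (k + S d - 1) by lia.
    apply (IHW _ eq_refl); auto.
    replace (k + S d) with (pred (k + S (S d))) by lia. auto.
    apply good_mren; auto. apply W_an_mren; auto. lia.
  - replace (k + 1 - 1) with (k + 0) by lia. apply GM; auto.
    replace (pred (k + 1)) with k in H by lia. auto.
Qed.

Lemma P2 : forall P, P 0 = false -> forall M M', mstep P M M' -> forall k, good k M -> good k M'.
Proof.
  intros P HP0. induction 1; intros k Hg; simpl in *.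
  - destruct Hg as [H2 [H3 H4]].
    assert (l <> 0 \/ l = 0) by lia.
    destruct H5 as [H5|H5].
    + destruct (H4 H5).
      pose proof (GR 1 F H0 k G ltac:(rewrite Nat.add_1_r; auto) H3 H1 ltac:(lia)).
      replace (k + 1 - 1) with k in H8 by lia. auto.
    + subst. congruence.
  - auto.
  - destruct Hg as [H2 [H3 H4]]. split; [|split]; auto.
    intros Hl; destruct (H4 Hl); split; auto. eapply WS; eauto.
  - destruct Hg as [H2 [H3 H4]]. split; [|split]; auto.
    intros Hl; destruct (H4 Hl); split; auto. eapply WS; eauto.
Qed.

Lemma comp_assoc : forall A B C, comp (comp A B) C = comp A (comp B C).
Proof. induction A; intros; simpl; f_equal; auto. Qed.
Lemma comp_hole_r : forall A, comp A Hole = A.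
Proof. induction A; simpl; f_equal; auto. Qed.
Lemma plug_comp : forall A B t, plug (comp A B) t = plug A (plug B t).
Proof. induction A; intros; simpl; f_equal; auto. Qed.
Lemma depth_comp : forall A B, depth (comp A B) = depth A + depth B.
Proof. induction A; intros; simpl; auto. Qed.

Lemma isA_comp : forall A B, isA A -> isA B -> isA (comp A B).
Proof.
  intros A B H; revert B; induction H; intros; simpl; auto.
  rewrite comp_assoc. simpl. constructor; auto.
Qed.

Inductive aupn : nat -> ctx -> Prop :=
| aupn0 : aupn 0 Hole
| aupnS : forall c A U e, isA A -> aupn c U -> aupn (S c) (CAppL (comp A U) e).
Inductive adownn : nat -> ctx -> Prop :=
| adn0 : adownn 0 Hole
| adnS : forall c A D, isA A -> adownn c D -> adownn (S c) (comp A (CLam D)).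
Inductive seg : nat -> ctx -> Prop :=
| seg0 : forall A, isA A -> seg 0 A
| segS : forall e S0 B x, seg e S0 -> isA B -> seg (S e) (comp S0 (CAppL B x)).
Definition dw j C := exists D A, C = comp D A /\ adownn j D /\ isA A.

Lemma aupn_isAup : forall c U, aupn c U -> isAup U.
Proof. induction 1; constructor; auto. Qed.
Lemma isAup_aupn : forall U, isAup U -> exists c, aupn c U.
Proof. induction 1. exists 0; constructor. destruct IHisAup as [c Hc]. exists (S c); constructor; auto. Qed.
Lemma adownn_isAdown : forall c D, adownn c D -> isAdown D.
Proof. induction 1; constructor; auto. Qed.
Lemma isAdown_adownn : forall D, isAdown D -> exists c, adownn c D.
Proof. induction 1. exists 0; constructor. destruct IHisAdown as [c Hc]. exists (S c); constructor; auto. Qed.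

Fixpoint cnt (C : ctx) : Z :=
  match C with Hole => 0 | CLam C => cnt C - 1 | CAppL C _ => cnt C + 1 | CAppR _ C => cnt C end.
Lemma cnt_comp : forall A B, cnt (comp A B) = (cnt A + cnt B)%Z.
Proof. induction A; intros; simpl; try rewrite IHA; lia. Qed.
Lemma cnt_isA : forall A, isA A -> cnt A = 0%Z.
Proof. induction 1; simpl; auto. rewrite cnt_comp; simpl; lia. Qed.
Lemma cnt_aupn : forall c U, aupn c U -> cnt U = Z.of_nat c.
Proof. induction 1; simpl; auto. rewrite cnt_comp, cnt_isA by auto. lia. Qed.
Lemma cnt_adownn : forall c D, adownn c D -> cnt D = (- Z.of_nat c)%Z.
Proof. induction 1; simpl; auto. rewrite cnt_comp, cnt_isA by auto. simpl. lia. Qed.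

Lemma adownn_last : forall c D, adownn (S c) D ->
  exists D' A', D = comp D' (comp A' (CLam Hole)) /\ adownn c D' /\ isA A'.
Proof.
  intros c D H. remember (S c) as c1. revert c Heqc1.
  induction H as [|c0 A D HA HD IH]; intros c' Hc; [discriminate|].
  inversion Hc; subst. destruct c' as [|c'].
  - inversion HD; subst. exists Hole, A. simpl. repeat split; auto; constructor.
  - destruct (IH c' eq_refl) as [D' [A' [E1 [E2 E3]]]]. subst.
    exists (comp A (CLam D')), A'. split; [|split]; auto.
    rewrite comp_assoc. simpl. auto. constructor; auto.
Qed.

Lemma aupn_adownn_isA : forall c U, aupn c U -> forall D M, adownn c D -> isA M -> isA (comp U (comp M D)).
Proof.
  induction 1; intros.
  - inversion H; subst. simpl. rewrite comp_hole_r. auto.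
  - destruct (adownn_last _ _ H1) as [D' [A' [E1 [E2 E3]]]]. subst.
    simpl. rewrite !comp_assoc.
    replace (comp A (comp U (comp M (comp D' (comp A' (CLam Hole))))))
      with (comp (comp (comp A (comp U (comp M D'))) A') (CLam Hole)).
    constructor; [|constructor]. apply isA_comp; auto. apply isA_comp; auto.
    rewrite !comp_assoc. auto.
Qed.

Lemma isA_aup_down : forall U D, isAup U -> isAdown D -> isA (comp U D) ->
  exists c, aupn c U /\ adownn c D.
Proof.
  intros. destruct (isAup_aupn _ H) as [c Hc]. destruct (isAdown_adownn _ H0) as [c' Hc'].
  exists c; split; auto. apply cnt_isA in H1. rewrite cnt_comp, (cnt_aupn _ _ Hc), (cnt_adownn _ _ Hc') in H1.
  replace c with c' by lia. auto.
Qed.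

Fixpoint Kf (k : nat) (C : ctx) : nat :=
  match C with Hole => k | CLam C => Kf (pred k) C | CAppL C _ => Kf (S k) C | CAppR _ C => Kf 0 C end.
Lemma Kf_comp : forall A B k, Kf k (comp A B) = Kf (Kf k A) B.
Proof. induction A; intros; simpl; auto. Qed.
Lemma Kf_isA : forall A, isA A -> forall k, Kf k A = k.
Proof. induction 1; intros; simpl; auto. rewrite Kf_comp. simpl. rewrite IHisA1. simpl. auto. Qed.
Lemma Kf_aupn : forall c U, aupn c U -> forall k, Kf k U = k + c.
Proof. induction 1; intros; simpl; [lia|]. rewrite Kf_comp, (Kf_isA A H), IHaupn. lia. Qed.

Lemma seg_pre : forall e S0, seg e S0 -> forall A x, isA A -> seg (S e) (CAppL (comp A S0) x).
Proof.
  induction 1; intros.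
  - replace (CAppL (comp A0 A) x) with (comp Hole (CAppL (comp A0 A) x)) by reflexivity.
    constructor. constructor; constructor. apply isA_comp; auto.
  - rewrite <- comp_assoc. replace (CAppL (comp (comp A S0) (CAppL B x)) x0)
      with (comp (CAppL (comp A S0) x0) (CAppL B x)) by (simpl; rewrite comp_assoc; auto).
    constructor; auto.
Qed.

Lemma seg_bal_end : forall e S0, seg e S0 -> forall B, isA B -> seg e (comp S0 B).
Proof.
  induction 1; intros.
  - constructor. apply isA_comp; auto.
  - rewrite comp_assoc. simpl. constructor; auto. apply isA_comp; auto.
Qed.

Lemma seg_app_end : forall e S0 x, seg e S0 -> seg (S e) (comp S0 (CAppL Hole x)).
Proof. intros. constructor; auto. constructor. Qed.

Lemma seg_lam_end : forall e S0, seg (S e) S0 -> seg e (comp S0 (CLam Hole)).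
Proof.
  intros. inversion H; subst. rewrite comp_assoc. simpl.
  replace (CAppL (comp B (CLam Hole)) x) with (comp Hole (CAppL (comp B (CLam Hole)) x)) by reflexivity.
  rewrite <- comp_assoc. rewrite comp_hole_r. apply seg_bal_end; auto. constructor; auto. constructor.
Qed.

Lemma aupn_app_end : forall c U, aupn c U -> forall B x, isA B -> aupn (S c) (comp U (CAppL B x)).
Proof.
  induction 1; intros; simpl.
  - replace B with (comp B Hole) at 1 by apply comp_hole_r. constructor; auto. constructor.
  - rewrite comp_assoc. constructor; auto.
Qed.

Lemma seg_split : forall e W, seg e W -> forall c, c <= e ->
  exists W0 U, W = comp W0 U /\ seg (e - c) W0 /\ aupn c U.
Proof.
  induction 1; intros.
  - exists A, Hole. replace c with 0 by lia. rewrite comp_hole_r. repeat split; auto. constructor; auto. constructor.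
  - destruct c.
    + exists (comp S0 (CAppL B x)), Hole. rewrite comp_hole_r. repeat split; auto.
      replace (S e - 0) with (S e) by lia. constructor; auto. constructor.
    + destruct (IHseg c ltac:(lia)) as [W0 [U [E1 [E2 E3]]]]. subst.
      exists W0, (comp U (CAppL B x)). rewrite comp_assoc. repeat split; auto.
      apply aupn_app_end; auto.
Qed.

Lemma seg_wrapE : forall e W, seg e W -> forall X, isE X -> isE (comp W X).
Proof.
  induction 1; intros.
  - apply isE_ans; auto.
  - rewrite comp_assoc. apply IHseg. simpl. apply isE_appL. apply isE_ans; auto.
Qed.

Lemma dw_hole : dw 0 Hole.
Proof. exists Hole, Hole. repeat split; constructor. Qed.
Lemma dw_lam : forall j C, dw j C -> dw (S j) (CLam C).
Proof.
  intros j C [D [A [E1 [E2 E3]]]]. subst. exists (CLam D), A. repeat split; auto.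
  replace (CLam D) with (comp Hole (CLam D)) by reflexivity. constructor; auto. constructor.
Qed.
Lemma adownn_pre : forall j D, adownn (S j) D -> forall A0, isA A0 -> adownn (S j) (comp A0 D).
Proof. intros. inversion H; subst. rewrite <- comp_assoc. constructor; auto. apply isA_comp; auto. Qed.
Lemma dw_app : forall j C x, dw (S j) C -> dw j (CAppL C x).
Proof.
  intros j C x [D [A [E1 [E2 E3]]]]. subst. inversion E2 as [|c A0 D0 HA0 HD0]; subst.
  destruct j as [|j].
  - inversion HD0; subst. exists Hole, (CAppL (comp A0 (CLam A)) x). simpl. repeat split.
    rewrite comp_assoc. simpl. auto. constructor. constructor; auto.
  - inversion HD0 as [|c A1 D1 HA1 HD1]; subst.
    exists (comp (CAppL (comp A0 (CLam A1)) x) (CLam D1)), A. split; [|split]; auto.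
    simpl. rewrite !comp_assoc. simpl. rewrite !comp_assoc. simpl. auto.
    constructor; auto. constructor; auto.
Qed.
Lemma dw0_isA : forall C, dw 0 C -> isA C.
Proof. intros C [D [A [E1 [E2 E3]]]]. subst. inversion E2; subst. simpl. auto. Qed.

Lemma Ldecomp : forall C k c, c <= Kf k C ->
  (exists C0 U, C = comp C0 U /\ aupn c U) \/
  (exists D S0 j e, C = comp D S0 /\ dw j D /\ seg e S0 /\ e < c /\ c <= k - j + e /\ j <= k).
Proof.
  induction C; intros; simpl in *.
  - destruct c.
    + left. exists Hole, Hole. split; auto. constructor.
    + right. exists Hole, Hole, 0, 0. repeat split; auto; first [apply dw_hole | constructor; constructor | lia].
  - destruct (IHC (pred k) c H) as [[C0 [U [E1 E2]]]|[D [S0 [j [e [E1 [E2 [E3 [E4 [E5 E6]]]]]]]]]].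
    + left. exists (CLam C0), U. subst; auto.
    + right. exists (CLam D), S0, (S j), e. subst. repeat split; auto; first [apply dw_lam; auto | lia].
  - destruct (IHC (S k) c H) as [[C0 [U [E1 E2]]]|[D [S0 [j [e [E1 [E2 [E3 [E4 [E5 E6]]]]]]]]]].
    + left. exists (CAppL C0 t), U. subst; auto.
    + subst. destruct j.
      * apply dw0_isA in E2. assert (seg (S e) (CAppL (comp D S0) t)) by (apply seg_pre; auto).
        destruct (le_lt_dec c (S e)).
        -- left. destruct (seg_split _ _ H0 c l) as [W0 [U [F1 [F2 F3]]]]. exists W0, U; auto.
        -- right. exists Hole, (CAppL (comp D S0) t), 0, (S e). repeat split; auto; first [apply dw_hole | lia].
      * right. exists (CAppL D t), S0, j, e. repeat split; auto; first [apply dw_app; auto | lia].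
  - destruct (IHC 0 c H) as [[C0 [U [E1 E2]]]|[D [S0 [j [e [E1 [E2 [E3 [E4 [E5 E6]]]]]]]]]].
    + left. exists (CAppR t C0), U. subst; auto.
    + lia.
Qed.

Lemma Ldecomp0 : forall C c, c <= Kf 0 C -> exists C0 U, C = comp C0 U /\ aupn c U.
Proof.
  intros. destruct (Ldecomp C 0 c H) as [H1|[D [S0 [j [e [E1 [E2 [E3 [E4 [E5 E6]]]]]]]]]]; auto. lia.
Qed.

Fixpoint mplugc (C : ctx) (X : mt) : mt :=
  match C with
  | Hole => X
  | CLam C => ML (mplugc C X)
  | CAppL C e => MA 0 (mplugc C X) (lift e)
  | CAppR e C => MA 0 (lift e) (mplugc C X)
  end.

Lemma lift_plug : forall C t, lift (plug C t) = mplugc C (lift t).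
Proof. induction C; intros; simpl; f_equal; auto. Qed.
Lemma erase_mplugc : forall C X, erase (mplugc C X) = plug C (erase X).
Proof. induction C; intros; simpl; f_equal; auto; apply erase_lift. Qed.
Lemma mplugc_comp : forall A B X, mplugc (comp A B) X = mplugc A (mplugc B X).
Proof. induction A; intros; simpl; f_equal; auto. Qed.

Lemma W_push : forall u c m l M e, stok u -> W (setdn u (S c) m) M -> W (setdn u c m) (MA l M e).
Proof.
  intros. destruct u; simpl in *.
  - apply W_anA; auto.
  - replace (c + d) with (S (c + d - 1)) by lia. apply W_fsA. replace (S (S (c + d - 1))) with (S (c + d)) by lia. auto.
  - replace (c + d) with (S (c + d - 1)) by lia. apply W_fxA. replace (S (S (c + d - 1))) with (S (c + d)) by lia. auto.
  - apply W_ndA; auto.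
  - apply W_evA; auto.
Qed.

Lemma W_pop : forall u c m M, stok u -> W (setdn u c (S m)) M -> W (setdn u (S c) m) (ML M).
Proof.
  intros. destruct u; simpl in *.
  - apply W_anL; auto.
  - replace (S (c + d)) with (S (S (c + d - 1))) by lia. apply W_fsL. replace (S (c + d - 1)) with (c + d) by lia. auto.
  - replace (S (c + d)) with (S (S (c + d - 1))) by lia. apply W_fxL. replace (S (c + d - 1)) with (c + d) by lia. auto.
  - apply W_ndL; auto.
  - apply W_evL; auto.
Qed.

Lemma PassA : forall A, isA A -> forall u c tg X, stok u -> W (setdn u c (depth A + tg)) X ->
  W (setdn u c tg) (mplugc A X).
Proof.
  induction 1; intros; simpl in *; auto.
  apply W_push; auto. rewrite mplugc_comp. apply IHisA1; auto. simpl.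
  apply W_pop; auto. apply IHisA2; auto. rewrite depth_comp in H2. simpl in H2.
  replace (depth A2 + S (depth A1 + tg)) with (depth A1 + S (depth A2) + tg) by lia. auto.
Qed.

Lemma PassAup : forall c' U, aupn c' U -> forall u c tg X, stok u ->
  W (setdn u (c' + c) (depth U + tg)) X -> W (setdn u c tg) (mplugc U X).
Proof.
  induction 1; intros; simpl in *; auto.
  apply W_push; auto. rewrite mplugc_comp. apply PassA; auto. apply IHaupn; auto.
  rewrite depth_comp in H2. replace (c + S c0) with (S c + c0) by lia.
  replace (depth U + (depth A + tg)) with (depth A + depth U + tg) by lia. auto.
Qed.

Lemma PassD : forall c D, adownn c D -> forall k n X, c <= k ->
  W (Snd (k - c) 0 (depth D + n)) X -> W (Snd k 0 n) (mplugc D X).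
Proof.
  induction 1; intros; simpl in *.
  - replace (k - 0) with k in H0 by lia. auto.
  - rewrite mplugc_comp. apply (PassA A H (Snd k 0 0) 0 n); simpl; auto.
    destruct k as [|k]. lia. apply W_ndB. apply IHadownn. lia.
    rewrite depth_comp in H2. simpl in H2.
    replace (depth D + S (depth A + n)) with (depth A + S (depth D) + n) by lia. auto.
Qed.

Lemma IE : forall E, isE E -> forall d n, W (Sev d n) (mplugc E (MV (depth E + n))).
Proof.
  induction 1; intros; simpl.
  - constructor.
  - apply W_evA. auto.
  - rewrite mplugc_comp. apply (PassA A H (Sev d 0) 0 n); simpl; auto.
    rewrite depth_comp. replace (depth A + depth E + n) with (depth E + (depth A + n)) by lia. auto.
  - rewrite mplugc_comp. destruct (isA_aup_down U D H H1 H4) as [c [Hc1 Hc2]].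
    apply (PassAup c U Hc1 (Sev d 0) 0 n); simpl; auto.
    apply W_evF.
    + rewrite lift_plug. apply (PassA A H0 (Sfx (c + 0 + d) 1) 0 0); simpl; auto.
      apply W_fx1. rewrite lift_plug. apply PassD with c; auto. lia.
      apply W_ndE. rewrite lift_plug. rewrite Nat.add_0_r.
      replace (depth D + depth E1) with (depth E1 + depth D) by lia. apply IHisE1.
    + rewrite depth_comp. simpl. replace (depth U + depth E2 + n) with (depth E2 + (depth U + n)) by lia.
      apply IHisE2.
Qed.

Definition NDc (k d n : nat) (t : term) : Prop :=
  exists C E c, t = plug C (plug E (Var (depth C + depth E + n))) /\ dw (d + c) C /\ c <= k /\ isE E.

Definition Qs (s : st) (t : term) : Prop :=
  match s with
  | San d => exists C b, t = plug C (Lam b) /\ dw d C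
  | Sfs _ => True
  | Sfx k d => exists C body, t = plug C (Lam body) /\ dw (d - 1) C /\ NDc k 0 0 body
  | Snd k d n => NDc k d n t
  | Sev d n => exists E, t = plug E (Var (depth E + n)) /\ forall W0, seg d W0 -> isE (comp W0 E)
  end.

Ltac liftinv := match goal with
  | H : MV _ = lift ?t |- _ => destruct t; simpl in H; try discriminate; inversion H; subst; clear H
  | H : ML _ = lift ?t |- _ => destruct t; simpl in H; try discriminate; inversion H; subst; clear H
  | H : MA _ _ _ = lift ?t |- _ => destruct t; simpl in H; try discriminate; inversion H; subst; clear H
  | _ => idtac
  end.

Lemma QW : forall s M, W s M -> forall t, M = lift t -> Qs s t.
Proof.
  induction 1; intros t Ht; liftinv; simpl.
  - exists Hole, t. split; auto. apply dw_hole.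
  - destruct (IHW t1 eq_refl) as [C [b [E1 E2]]]. exists (CAppL C t2), b. subst. split; auto. apply dw_app; auto.
  - destruct (IHW t eq_refl) as [C [b [E1 E2]]]. exists (CLam C), b. subst. split; auto. apply dw_lam; auto.
  - auto.
  - auto.
  - auto.
  - destruct (IHW t1 eq_refl) as [C [b [E1 [E2 E3]]]]. exists (CAppL C t2), b. subst. split; auto.
    split; auto. apply dw_app. replace (S (d - 0)) with (S d) by lia. auto.
  - destruct (IHW t eq_refl) as [C [b [E1 [E2 E3]]]]. exists (CLam C), b. subst. split; auto.
    split; auto. replace (S (S d) - 1) with (S (S d - 1)) by lia. apply dw_lam; auto.
    replace d with (S d - 1) by lia. auto.
  - exists Hole, t. split; auto. split; auto. apply dw_hole. apply (IHW t eq_refl).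
  - destruct (IHW t1 eq_refl) as [C [E [c [E1 [E2 [E3 E4]]]]]]. exists (CAppL C t2), E, c. subst.
    repeat split; auto. apply dw_app. auto.
  - destruct (IHW t eq_refl) as [C [E [c [E1 [E2 [E3 E4]]]]]]. exists (CLam C), E, c. subst.
    repeat split; auto.
    replace (depth C + depth E + S n) with (depth (CLam C) + depth E + n) by (simpl; lia); reflexivity.
    apply dw_lam. auto.
  - destruct (IHW t eq_refl) as [C [E [c [E1 [E2 [E3 E4]]]]]]. exists (CLam C), E, (S c). subst.
    repeat split; auto.
    replace (depth C + depth E + S n) with (depth (CLam C) + depth E + n) by (simpl; lia); reflexivity.
    apply dw_lam. auto. lia.
  - destruct (IHW _ Ht) as [E [E1 E2]]. exists Hole, E, 0. subst. repeat split; auto.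
    apply dw_hole. lia. specialize (E2 Hole (seg0 _ isA_hole)). auto.
  - exists Hole. split; auto. intros. rewrite comp_hole_r.
    pose proof (seg_wrapE _ _ H Hole isE_hole). rewrite comp_hole_r in H0. auto.
  - destruct (IHW t1 eq_refl) as [E [E1 E2]]. exists (CAppL E t2). subst. split; auto.
    intros. replace (comp W0 (CAppL E t2)) with (comp (comp W0 (CAppL Hole t2)) E).
    apply E2. apply seg_app_end; auto. rewrite comp_assoc. auto.
  - destruct (IHW t eq_refl) as [E [E1 E2]]. exists (CLam E). subst. split.
    replace (depth E + S n) with (depth (CLam E) + n) by (simpl; lia); reflexivity.
    intros. replace (comp W0 (CLam E)) with (comp (comp W0 (CLam Hole)) E).
    apply E2. apply seg_lam_end; auto. rewrite comp_assoc. auto.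
  - destruct (IHW1 t1 eq_refl) as [C [body [E1 [E2 E3]]]].
    destruct E3 as [C' [E1' [c [F1 [F2 [F3 F4]]]]]].
    destruct (IHW2 t2 eq_refl) as [E2' [G1 G2]].
    exists (CAppR t1 E2'). subst. split. auto.
    intros W0 HW0. destruct F2 as [D1 [A' [K1 [K2 K3]]]]. subst.
    destruct (seg_split _ _ HW0 c F3) as [W0' [U [S1 [S2 S3]]]]. subst.
    rewrite comp_assoc. apply seg_wrapE with (d - c); auto.
    replace (plug (comp D1 A') (plug E1' (Var (depth (comp D1 A') + depth E1' + 0))))
      with (plug D1 (plug (comp A' E1') (Var (depth D1 + depth (comp A' E1'))))).
    apply isE_need.
    + apply aupn_isAup with c; auto.
    + apply dw0_isA. simpl in E2. auto.
    + apply adownn_isAdown with c; auto.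
    + apply isE_ans; auto.
    + specialize (G2 Hole (seg0 _ isA_hole)). auto.
    + pose proof (aupn_adownn_isA c U S3 D1 Hole K2 isA_hole). auto.
    + rewrite !plug_comp, !depth_comp.
      replace (depth D1 + depth A' + depth E1' + 0) with (depth D1 + (depth A' + depth E1')) by lia. reflexivity.
Qed.

Fixpoint hyp (C : ctx) (j : nat) : Prop :=
  match C with Hole => j = 1 | CLam C => 2 <= j /\ hyp C (j - 1) | CAppL C _ => hyp C (S j) | CAppR _ _ => False end.
Fixpoint hypa (C : ctx) (c : nat) : Prop :=
  match C with Hole => c = 0 | CLam C => 1 <= c /\ hypa C (c - 1) | CAppL C _ => hypa C (S c) | CAppR _ _ => False end.

Lemma hyp_isA : forall A, isA A -> forall C j, 1 <= j -> hyp C j -> hyp (comp A C) j.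
Proof.
  induction 1; intros; simpl; auto.
  rewrite comp_assoc. simpl. apply IHisA1. lia. simpl. split. lia.
  replace (j - 0) with j by lia. apply IHisA2; auto.
Qed.
Lemma hypa_isA : forall A, isA A -> forall C c, hypa C c -> hypa (comp A C) c.
Proof.
  induction 1; intros; simpl; auto.
  rewrite comp_assoc. simpl. apply IHisA1. simpl. split. lia.
  replace (c - 0) with c by lia. apply IHisA2; auto.
Qed.

Lemma R1 : forall C j B G, hyp C j ->
  redf j (mplugc C (ML B)) G = mplugc C (mpa 0 0 (mren (fun i => i + depth C) G) B).
Proof.
  induction C; intros; simpl in *; try contradiction.
  - subst. simpl. f_equal. rewrite <- (mren_id G) at 1. apply mren_ext. intros; lia.
  - destruct H as [H1 H2]. destruct j as [|[|j]]; try lia. f_equal. rewrite IHC; auto.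
    f_equal. f_equal. rewrite mren_mren. apply mren_ext. intros; lia.
  - f_equal. apply IHC; auto.
Qed.

Lemma R2 : forall C c k b B, hypa C c ->
  mpa c k (mplugc C (ML b)) B = mplugc C (msub (nsub (ML b) (k + depth C)) B).
Proof.
  induction C; intros; simpl in *; try contradiction.
  - subst. rewrite Nat.add_0_r. auto.
  - destruct H as [H1 H2]. destruct c as [|c]; try lia. f_equal. rewrite IHC.
    replace (S k + depth C) with (k + S (depth C)) by lia. auto. replace c with (S c - 1) by lia; auto.
  - f_equal. apply IHC; auto.
Qed.

Lemma shift_plug : forall C d c t, shift d c (plug C t) = plug (shiftc d c C) (shift d (c + depth C) t).
Proof.
  induction C; intros; simpl.
  - rewrite Nat.add_0_r. auto.
  - rewrite IHC. replace (S c + depth C) with (c + S (depth C)) by lia. auto.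
  - rewrite IHC. auto.
  - rewrite IHC. auto.
Qed.
Lemma depth_shiftc : forall C d c, depth (shiftc d c C) = depth C.
Proof. induction C; intros; simpl; auto. Qed.
Lemma shiftc_comp : forall A B d c, shiftc d c (comp A B) = comp (shiftc d c A) (shiftc d (c + depth A) B).
Proof.
  induction A; intros; simpl; try rewrite IHA; auto.
  rewrite Nat.add_0_r; auto. replace (S c + depth A) with (c + S (depth A)) by lia. auto.
Qed.
Lemma isA_shiftc : forall A, isA A -> forall d c, isA (shiftc d c A).
Proof.
  induction 1; intros; simpl. constructor.
  rewrite shiftc_comp. simpl. constructor; auto.
Qed.

Lemma I2 : forall A1 A2 body b, isA A1 -> isA A2 ->
  erase (redf 1 (lift (plug A1 (Lam body))) (lift (plug A2 (Lam b)))) =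
  plug A1 (plug (shiftc (depth A1) 0 A2) (subst (need_sub (depth A1) (depth A2) (Lam b)) body)).
Proof.
  intros. rewrite lift_plug. simpl. rewrite R1.
  2: { pose proof (hyp_isA A1 H Hole 1 (le_n 1) eq_refl). rewrite comp_hole_r in H1. exact H1. }
  replace (mren (fun i => i + depth A1) (lift (plug A2 (Lam b)))) with
    (lift (plug (shiftc (depth A1) 0 A2) (shift (depth A1) (depth A2) (Lam b)))).
  2: { rewrite <- shift_plug. rewrite lift_shift. apply mren_ext. intros. unfold shf. simpl. auto. }
  rewrite lift_plug. simpl. rewrite R2.
  2: { pose proof (hypa_isA _ (isA_shiftc A2 H0 (depth A1) 0) Hole 0 eq_refl). rewrite comp_hole_r in H1. exact H1. }
  rewrite erase_mplugc, erase_mplugc. f_equal. f_equal.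
  transitivity (erase (lift (subst (need_sub (depth A1) (depth A2) (Lam b)) body))).
  - f_equal. rewrite lift_subst. apply msub_ext. intros [|i]; simpl; auto.
    rewrite depth_shiftc. auto.
  - apply erase_lift.
Qed.

Fixpoint relab (f : nat -> nat) (M : mt) : mt :=
  match M with MV i => MV i | ML M => ML (relab f M) | MA l M N => MA (f l) (relab f M) (relab f N) end.

Lemma um_relab : forall f M, um (relab f M) = um M.
Proof. induction M; simpl; f_equal; auto. Qed.
Lemma erase_relab : forall f M, erase (relab f M) = erase M.
Proof. intros. rewrite <- erase_um, um_relab, erase_um. auto. Qed.
Lemma relab_mren : forall f M xi, relab f (mren xi M) = mren xi (relab f M).
Proof. induction M; intros; simpl; f_equal; auto. Qed.
Lemma relab_msub : forall f M s, relab f (msub s M) = msub (fun i => relab f (s i)) (relab f M).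
Proof.
  induction M; intros; simpl; f_equal; auto.
  rewrite IHM. apply msub_ext. intros [|i]; simpl; auto. apply relab_mren.
Qed.
Lemma relab_mpa : forall f, f 0 = 0 -> forall G c k B, relab f (mpa c k G B) = mpa c k (relab f G) (relab f B).
Proof.
  intros f Hf. induction G; intros; simpl; try rewrite Hf; auto.
  - destruct c; simpl; f_equal; auto. rewrite relab_msub. apply msub_ext. intros [|i]; simpl; auto.
  - f_equal; auto.
Qed.
Lemma relab_redf : forall f, f 0 = 0 -> forall F j G, relab f (redf j F G) = redf j (relab f F) (relab f G).
Proof.
  intros f Hf. induction F; intros; simpl; try rewrite Hf; auto.
  - destruct j as [|[|j]]; simpl; try rewrite Hf; auto. apply relab_mpa; auto.
    f_equal. rewrite IHF, relab_mren. auto.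
  - f_equal; auto.
Qed.
Lemma dev_relab : forall f P Q, f 0 = 0 -> (forall l, P (f l) = Q l) -> forall M,
  dev P (relab f M) = relab f (dev Q M).
Proof.
  intros f P Q Hf HPQ. induction M; simpl; f_equal; auto.
  rewrite HPQ. destruct (Q n); simpl; rewrite ?IHM1, ?IHM2; auto.
  rewrite relab_redf; auto.
Qed.

Lemma W_um_eq : forall s M, W s M -> forall M', um M' = um M -> W s M'.
Proof.
  induction 1; intros M' HM; destruct M'; simpl in HM; try discriminate; inversion HM; subst;
    first [constructor; auto; fail | apply W_ndE; apply IHW; simpl; auto | apply W_evF; auto].
Qed.

Lemma good_relab : forall f, f 0 = 0 -> (forall l, f l <> 0 -> l <> 0) -> forall M k, good k M -> good k (relab f M).
Proof.
  intros f Hf Hnz. induction M; intros; simpl in *; auto.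
  destruct H as [H1 [H2 H3]]. split; [|split]; auto.
  intros Hl. destruct (H3 (Hnz _ Hl)). split; eapply W_um_eq; eauto; apply um_relab.
Qed.

Fixpoint labs (L : nat -> bool) (M : mt) : Prop :=
  match M with MV _ => True | ML M => labs L M | MA l M N => L l = true /\ labs L M /\ labs L N end.

Lemma labs_mren : forall L M xi, labs L M -> labs L (mren xi M).
Proof. induction M; intros; simpl in *; intuition. Qed.
Lemma labs_msub : forall L M s, labs L M -> (forall i, labs L (s i)) -> labs L (msub s M).
Proof.
  induction M; intros; simpl in *; intuition.
  apply IHM; auto. intros [|i]; simpl; auto. apply labs_mren; auto.
Qed.
Lemma labs_mpa : forall L, L 0 = true -> forall G c k B, labs L G -> labs L B -> labs L (mpa c k G B).
Proof.
  intros L HL. induction G; intros; simpl in *; intuition.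
  destruct c; simpl; auto. apply labs_msub; auto. intros [|i]; simpl; auto.
Qed.
Lemma labs_redf : forall L, L 0 = true -> forall F j G, labs L F -> labs L G -> labs L (redf j F G).
Proof.
  intros L HL. induction F; intros; simpl in *; intuition.
  destruct j as [|[|j]]; simpl; intuition. apply labs_mpa; auto. apply IHF; auto. apply labs_mren; auto.
Qed.
Lemma labs_dev : forall L L' P, L 0 = true -> (forall l, L' l = true -> P l = false -> L l = true) ->
  forall M, labs L' M -> labs L (dev P M).
Proof.
  intros L L' P HL HLL. induction M; intros; simpl in *; intuition.
  destruct (P n) eqn:E; simpl; auto. apply labs_redf; auto.
Qed.
Lemma dev_ext : forall L P Q, (forall l, L l = true -> P l = Q l) -> forall M, labs L M -> dev P M = dev Q M.
Proof.
  intros L P Q HPQ. induction M; intros Hl; simpl in *.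
  - auto.
  - f_equal; auto.
  - destruct Hl as [H1 [H2 H3]]. rewrite HPQ by auto. rewrite IHM1, IHM2 by auto. auto.
Qed.
Lemma labs_relab_id : forall f L M, (forall l, L l = true -> f l = l) -> labs L M -> relab f M = M.
Proof. induction M; intros; simpl in *; intuition; f_equal; auto. Qed.

Lemma mstep_mono : forall P Q, (forall l, P l = true -> Q l = true) -> forall M M', mstep P M M' -> mstep Q M M'.
Proof. intros P Q HPQ. induction 1; constructor; auto. Qed.
Lemma msteps_mono : forall P Q, (forall l, P l = true -> Q l = true) -> forall M M', msteps P M M' -> msteps Q M M'.
Proof.
  intros P Q HPQ. induction 1. apply rt_step. eapply mstep_mono; eauto. apply rt_refl. eapply rt_trans; eauto.
Qed.
Lemma P2_rt : forall P, P 0 = false -> forall M M', msteps P M M' -> forall k, good k M -> good k M'.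
Proof. intros P HP. induction 1; intros; eauto. eapply P2; eauto. Qed.

Lemma good_lift : forall t k, good k (lift t).
Proof. induction t; intros; simpl; auto. repeat split; auto. intros; lia. intros; lia. Qed.
Lemma dev_unmarked : forall P, P 0 = false -> forall M, um M = M -> dev P M = M.
Proof.
  intros P HP. induction M; intros; simpl in *; auto.
  - inversion H. rewrite H1. f_equal; auto.
  - inversion H. subst. rewrite HP. rewrite H2, H3. rewrite IHM1, IHM2; auto.
Qed.

Inductive single2 : mt -> mt -> Prop :=
| s2_root : forall F G, um F = F -> um G = G -> W (Sfs 1) F -> W (San 0) G ->
    single2 (MA 2 F G) (redf 1 F G)
| s2_lam : forall X X', single2 X X' -> single2 (ML X) (ML X')
| s2_appL : forall X X' N, um N = N -> single2 X X' -> single2 (MA 0 X N) (MA 0 X' N)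
| s2_appR : forall X X' N, um N = N -> single2 X X' -> single2 (MA 0 N X) (MA 0 N X').

Definition L01 (l : nat) := l <=? 1.
Definition L012 (l : nat) := l <=? 2.
Definition L02 (l : nat) := (l =? 0) || (l =? 2).
Definition P1 (l : nat) := l =? 1.
Definition P2' (l : nat) := l =? 2.
Definition P12 (l : nat) := (l =? 1) || (l =? 2).
Definition fg2 (l : nat) := if l =? 2 then 0 else l.

Lemma um_idem : forall M, um (um M) = um M.
Proof. induction M; simpl; f_equal; auto. Qed.
Lemma um_lift : forall t, um (lift t) = lift t.
Proof. induction t; simpl; f_equal; auto. Qed.

Lemma relab_fg2_id : forall M, labs L01 M -> relab fg2 M = M.
Proof. intros. apply labs_relab_id with L01; auto. intros. unfold L01, fg2 in *. destruct l as [|[|l]]; simpl in *; auto; discriminate. Qed.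

Lemma labs_weak : forall L L', (forall l, L l = true -> L' l = true) -> forall M, labs L M -> labs L' M.
Proof. intros L L' H. induction M; simpl; intuition. Qed.
Lemma L01_012 : forall l, L01 l = true -> L012 l = true.
Proof. unfold L01, L012. intros. apply Nat.leb_le in H. apply Nat.leb_le. lia. Qed.

Ltac sp7 := split; [|split; [|split; [|split; [|split; [|split]]]]].

Lemma TR : forall X X', single2 X X' -> forall M, um M = um X -> labs L01 M ->
  exists Mh Y', um Mh = um M /\ relab fg2 Mh = M /\ labs L012 Mh /\
    (forall k, good k M -> good k X -> good k Mh) /\ mstep P12 Mh Y' /\ um Y' = um X' /\ labs L01 Y'.
Proof.
  induction 1; intros M HM HL.
  - destruct M; simpl in HM; try discriminate. inversion HM; subst. simpl in HL. destruct HL as [HL1 [HL2 HL3]].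
    exists (MA (if n =? 1 then 1 else 2) M1 M2), (redf 1 M1 M2). sp7.
    + auto.
    + simpl. rewrite (relab_fg2_id M1), (relab_fg2_id M2) by auto. f_equal.
      unfold L01, fg2 in *. destruct n as [|[|n]]; simpl in *; auto; discriminate.
    + simpl. split; [destruct (n =? 1); auto|]. split; apply (labs_weak L01); solve [apply L01_012|auto].
    + intros k [G1 [G2 G3]] [K1 [K2 K3]]. simpl. split; [|split]; auto.
      intros _. destruct (K3 ltac:(lia)) as [K4 K5]. split.
      apply (W_um_eq _ _ K4); congruence. apply (W_um_eq _ _ K5); congruence.
    + constructor. unfold P12. destruct (n =? 1); auto.
      apply (W_um_eq _ _ H1); congruence. apply (W_um_eq _ _ H2); congruence.
    + rewrite !um_redf. congruence.
    + apply labs_redf; auto.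
  - destruct M; simpl in HM; try discriminate. inversion HM. simpl in HL.
    destruct (IHsingle2 M H1 HL) as [Mh [Y' [E1 [E2 [E3 [E4 [E5 [E6 E7]]]]]]]].
    exists (ML Mh), (ML Y'). simpl. sp7; try congruence; auto.
    constructor; auto.
  - destruct M; simpl in HM; try discriminate. inversion HM. simpl in HL. destruct HL as [HL1 [HL2 HL3]].
    destruct (IHsingle2 M1 H2 HL2) as [Mh [Y' [E1 [E2 [E3 [E4 [E5 [E6 E7]]]]]]]].
    exists (MA n Mh M2), (MA n Y' M2). simpl. sp7.
    + congruence.
    + f_equal; auto. unfold L01, fg2 in *. destruct n as [|[|n]]; simpl in *; auto; discriminate.
      apply relab_fg2_id; auto.
    + split; [apply L01_012; auto|]. split; auto. apply (labs_weak L01); solve [apply L01_012|auto].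
    + intros k [G1 [G2 G3]] [K1 [K2 K3]]. split; [|split]; auto.
      intros Hn. destruct (G3 Hn). split; auto. eapply W_um_eq; eauto.
    + constructor; auto.
    + congruence.
    + repeat split; auto.
  - destruct M; simpl in HM; try discriminate. inversion HM. simpl in HL. destruct HL as [HL1 [HL2 HL3]].
    destruct (IHsingle2 M2 H3 HL3) as [Mh [Y' [E1 [E2 [E3 [E4 [E5 [E6 E7]]]]]]]].
    exists (MA n M1 Mh), (MA n M1 Y'). simpl. sp7.
    + congruence.
    + f_equal; auto. unfold L01, fg2 in *. destruct n as [|[|n]]; simpl in *; auto; discriminate.
      apply relab_fg2_id; auto.
    + split; [apply L01_012; auto|]. split; auto. apply (labs_weak L01); solve [apply L01_012|auto].
    + intros k [G1 [G2 G3]] [K1 [K2 K3]]. split; [|split]; auto.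
      intros Hn. destruct (G3 Hn). split; auto. eapply W_um_eq; eauto.
    + constructor; auto.
    + congruence.
    + repeat split; auto.
Qed.

Lemma single2_plug : forall C Y Y', single2 Y Y' -> single2 (mplugc C Y) (mplugc C Y').
Proof. induction C; intros; simpl; auto; constructor; auto; apply um_lift. Qed.
Lemma um_mplugc : forall C Y, um (mplugc C Y) = mplugc C (um Y).
Proof. induction C; intros; simpl; f_equal; auto; apply um_lift. Qed.
Lemma good_plug : forall C k Y, good (Kf k C) Y -> good k (mplugc C Y).
Proof.
  induction C; intros; simpl in *; auto.
  - repeat split; auto. apply good_lift. intros; lia. intros; lia.
  - repeat split; auto. apply good_lift. intros; lia. intros; lia.
Qed.

Lemma L1 : forall t t1, step t t1 -> exists X X', um X = lift t /\ single2 X X' /\ good 0 X /\ erase X' = t1.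
Proof.
  induction 1.
  - inversion H; subst.
    set (f := plug A1 (Lam (plug D (plug E (Var (depth D + depth E)))))).
    set (a := plug A2 (Lam b)).
    destruct (isA_aup_down U D H0 H2 H5) as [c [Hc1 Hc2]].
    assert (HK : Kf 0 U = c) by (rewrite (Kf_aupn c U Hc1); lia).
    assert (Hf : W (Sfx (Kf 0 U) 1) (lift f)).
    { unfold f. rewrite lift_plug. apply (PassA A1 H1 (Sfx (Kf 0 U) 1) 0 0); simpl; auto.
      apply W_fx1. rewrite lift_plug. apply PassD with c; auto. lia.
      apply W_ndE. rewrite lift_plug. pose proof (IE E H3 0 (depth D + 0)).
      replace (depth E + (depth D + 0)) with (depth D + depth E) in H6 by lia. auto. }
    assert (Ha : W (San 0) (lift a)).
    { unfold a. rewrite lift_plug. apply (PassA A2 H4 (San 0) 0 0); simpl; auto. constructor. }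
    exists (mplugc U (MA 2 (lift f) (lift a))), (mplugc U (redf 1 (lift f) (lift a))).
    split; [|split; [|split]].
    + rewrite um_mplugc. simpl. rewrite !um_lift. rewrite lift_plug. auto.
    + apply single2_plug. constructor; auto; try apply um_lift. apply (fx_fs _ _ Hf).
    + apply good_plug. simpl. split; [|split]. apply good_lift. apply good_lift. intros; auto.
    + rewrite erase_mplugc. f_equal. unfold f, a. apply I2; auto.
  - destruct IHstep as [X [X' [E1 [E2 [E3 E4]]]]].
    exists (ML X), (ML X'). simpl. repeat split; auto. congruence. constructor; auto. congruence.
  - destruct IHstep as [X [X' [E1 [E2 [E3 E4]]]]].
    exists (MA 0 X (lift e)), (MA 0 X' (lift e)). simpl. split; [|split; [|split]].
    + rewrite um_lift. congruence.
    + constructor; auto. apply um_lift.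
    + split; [|split]. apply good_mono with 0; auto. apply good_lift. intros; lia.
    + rewrite erase_lift. congruence.
  - destruct IHstep as [X [X' [E1 [E2 [E3 E4]]]]].
    exists (MA 0 (lift e) X), (MA 0 (lift e) X'). simpl. split; [|split; [|split]].
    + rewrite um_lift. congruence.
    + constructor; auto. apply um_lift.
    + split; [|split]. apply good_lift. auto. intros; lia.
    + rewrite erase_lift. congruence.
Qed.

Lemma step_plug : forall C s s', step s s' -> step (plug C s) (plug C s').
Proof. induction C; intros; simpl; [auto | apply step_lam | apply step_appL | apply step_appR]; auto. Qed.

Lemma L2 : forall P, P 0 = false -> forall X Y, mstep P X Y -> forall k, good k X -> forall C, k <= Kf 0 C ->
  step (plug C (erase X)) (plug C (erase Y)).
Proof.
  intros P HP0. induction 1; intros k Hg Cx HK; simpl in *.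
  - destruct Hg as [G1 [G2 G3]]. assert (l <> 0) by (intro; subst; congruence).
    destruct (G3 H2) as [HF HG].
    assert (HF' : W (Sfx k 1) (lift (erase F))) by (apply (W_um_eq _ _ HF); rewrite lift_erase, um_idem; auto).
    assert (HG' : W (San 0) (lift (erase G))) by (apply (W_um_eq _ _ HG); rewrite lift_erase, um_idem; auto).
    destruct (QW _ _ HF' (erase F) eq_refl) as [A1 [body [EF [DA1 ND]]]].
    destruct (QW _ _ HG' (erase G) eq_refl) as [A2 [b [EG DA2]]].
    destruct ND as [C' [E [c [EB [DC' [Hc HE]]]]]].
    destruct DC' as [D1 [A' [EC' [HD1 HA']]]].
    apply dw0_isA in DA1. apply dw0_isA in DA2.
    destruct (Ldecomp0 Cx c ltac:(lia)) as [C0 [U [EC HU]]].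
    replace (erase (redf 1 F G)) with (erase (redf 1 (lift (erase F)) (lift (erase G)))).
    2: { rewrite !lift_erase, <- um_redf, erase_um. auto. }
    rewrite EF, EG, EB. rewrite I2 by auto. subst.
    replace (plug (comp D1 A') (plug E (Var (depth (comp D1 A') + depth E + 0))))
      with (plug D1 (plug (comp A' E) (Var (depth D1 + depth (comp A' E))))).
    2: { rewrite !plug_comp, !depth_comp. f_equal. f_equal. f_equal. f_equal. lia. }
    rewrite !(plug_comp C0 U). apply step_plug.
    constructor.
    apply beta_need_rule.
    + apply aupn_isAup with c; auto.
    + auto.
    + apply adownn_isAdown with c; auto.
    + apply isE_ans; auto.
    + auto.
    + pose proof (aupn_adownn_isA c U HU D1 Hole HD1 isA_hole). auto.
  - replace (plug Cx (Lam (erase M))) with (plug (comp Cx (CLam Hole)) (erase M)) by (rewrite plug_comp; auto).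
    replace (plug Cx (Lam (erase M'))) with (plug (comp Cx (CLam Hole)) (erase M')) by (rewrite plug_comp; auto).
    apply IHmstep with (pred k); auto. rewrite Kf_comp. simpl. lia.
  - replace (plug Cx (App (erase M) (erase N))) with (plug (comp Cx (CAppL Hole (erase N))) (erase M)) by (rewrite plug_comp; auto).
    replace (plug Cx (App (erase M') (erase N))) with (plug (comp Cx (CAppL Hole (erase N))) (erase M')) by (rewrite plug_comp; auto).
    destruct Hg as [G1 [G2 G3]]. apply IHmstep with (S k); auto. rewrite Kf_comp. simpl. lia.
  - replace (plug Cx (App (erase M) (erase N))) with (plug (comp Cx (CAppR (erase M) Hole)) (erase N)) by (rewrite plug_comp; auto).
    replace (plug Cx (App (erase M) (erase N'))) with (plug (comp Cx (CAppR (erase M) Hole)) (erase N')) by (rewrite plug_comp; auto).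
    destruct Hg as [G1 [G2 G3]]. apply IHmstep with 0; auto. rewrite Kf_comp. simpl. lia.
Qed.

Lemma L2s : forall P, P 0 = false -> forall X Y, msteps P X Y -> good 0 X -> steps (erase X) (erase Y).
Proof.
  intros P HP. induction 1; intros.
  - apply rt_step. apply (L2 P HP x y H 0 H0 Hole). simpl; lia.
  - apply rt_refl.
  - eapply rt_trans. apply IHclos_refl_trans1; auto. apply IHclos_refl_trans2.
    eapply P2_rt; eauto.
Qed.

Definition par (t u : term) : Prop :=
  exists M, labs L01 M /\ good 0 M /\ erase M = t /\ erase (dev P1 M) = u.

Lemma par_steps : forall t u, par t u -> steps t u.
Proof.
  intros t u [M [H1 [H2 [H3 H4]]]]. subst.
  apply (L2s P1 eq_refl). apply msteps_dev; auto. eapply good_wm; eauto. auto.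
Qed.

Lemma dev_single2 : forall X X', single2 X X' -> dev P2' X = X'.
Proof.
  induction 1; simpl.
  - rewrite !dev_unmarked; auto.
  - f_equal; auto.
  - rewrite IHsingle2, dev_unmarked; auto.
  - rewrite IHsingle2, dev_unmarked; auto.
Qed.

Definition f21 (l : nat) := if l =? 2 then 1 else if l =? 1 then 0 else l.

Lemma single2_labs : forall X X', single2 X X' -> labs L02 X.
Proof.
  assert (forall M, um M = M -> labs L02 M).
  { induction M; simpl; intros Hu.
    - auto.
    - apply IHM. injection Hu; auto.
    - injection Hu as Hn Ha Hb. subst n. split. reflexivity. split; [apply IHM1 | apply IHM2]; auto. }
  induction 1; simpl; repeat split; auto.
Qed.

Lemma step_par : forall t u, step t u -> par t u.
Proof.
  intros. destruct (L1 t u H) as [X [X' [E1 [E2 [E3 E4]]]]].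
  exists (relab f21 X). split; [|split; [|split]].
  - assert (labs L02 X) by (eapply single2_labs; eauto).
    clear -H0. induction X; simpl in *; auto. destruct H0 as [H1 [H2 H3]]. repeat split; auto.
    unfold L02, L01, f21 in *. destruct n as [|[|[|n]]]; simpl in *; auto.
  - apply good_relab; auto. intros l. unfold f21. destruct l as [|[|[|l]]]; simpl; auto.
  - rewrite erase_relab. rewrite <- erase_um, E1, erase_lift. auto.
  - rewrite (dev_relab f21 P1 P2'); auto. rewrite erase_relab. rewrite (dev_single2 _ _ E2). auto.
    intros l. unfold P1, P2', f21. destruct l as [|[|[|l]]]; simpl; auto.
Qed.

Lemma strip : forall t t1 t2, step t t1 -> par t t2 -> exists t3, par t1 t3 /\ steps t2 t3.
Proof.
  intros t t1 t2 Hs [M [HL [HG [HE HD]]]].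
  destruct (L1 t t1 Hs) as [X [X' [E1 [E2 [E3 E4]]]]].
  assert (HUM : um M = um X) by (rewrite E1, <- HE, lift_erase; auto).
  destruct (TR X X' E2 M HUM HL) as [Mh [Y' [F1 [F2 [F3 [F4 [F5 [F6 F7]]]]]]]].
  assert (HGh : good 0 Mh) by auto.
  assert (HP12 : P12 0 = false) by reflexivity.
  assert (HGY : good 0 Y') by (eapply P2; eauto).
  assert (Hwm : wm Mh) by (eapply good_wm; eauto).
  exists (erase (dev P12 Mh)). split.
  - exists Y'. split; [|split; [|split]]; auto.
    + rewrite <- E4, <- (erase_um Y'), F6, erase_um. auto.
    + rewrite (dev_ext L01 P1 P12); auto.
      rewrite (ss P12 HP12 Mh Y' F5 Hwm). auto.
      intros l. unfold L01, P1, P12. destruct l as [|[|l]]; simpl; auto; discriminate.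
  - assert (Et2 : t2 = erase (dev P1 Mh)).
    { rewrite <- HD, <- F2. rewrite (dev_relab fg2 P1 P1); auto. apply erase_relab.
      intros l. unfold P1, fg2. destruct l as [|[|[|l]]]; simpl; auto. }
    rewrite Et2.
    set (Q := dev P1 Mh).
    assert (HMQ : msteps P1 Mh Q) by (apply msteps_dev; auto).
    assert (HGQ : good 0 Q) by (apply (P2_rt P1 eq_refl Mh Q HMQ 0 HGh)).
    assert (HLQ : labs L02 Q).
    { apply (labs_dev L02 L012 P1); auto. intros l. unfold L012, L02, P1.
      destruct l as [|[|[|l]]]; simpl; auto; discriminate. }
    assert (HwQ : wm Q) by (eapply good_wm; eauto).
    replace (dev P12 Mh) with (dev P2' Q).
    + apply (L2s P2' eq_refl). apply msteps_dev; auto. auto.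
    + rewrite (dev_ext L02 P2' P12 ltac:(intros l; unfold L02, P2', P12; destruct l as [|[|[|l]]]; simpl; auto; discriminate) Q HLQ).
      apply (ss_rt P12 HP12). eapply msteps_mono; [|exact HMQ]. intros l. unfold P1, P12. intros ->. auto.
      auto.
Qed.

Lemma stripN : forall t t1, steps t t1 -> forall t2, par t t2 -> exists t3, par t1 t3 /\ steps t2 t3.
Proof.
  induction 1; intros.
  - eapply strip; eauto.
  - exists t2. split; auto. apply rt_refl.
  - destruct (IHclos_refl_trans1 t2 H1) as [s3 [Hs1 Hs2]].
    destruct (IHclos_refl_trans2 s3 Hs1) as [t3 [Ht1 Ht2]].
    exists t3. split; auto. eapply rt_trans; eauto.
Qed.

Theorem lemma1 : forall e e1 e2 : term,
  steps e e1 -> steps e e2 -> exists e', steps e1 e' /\ steps e2 e'.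
Proof.
  intros e e1 e2 H1 H2. revert e1 H1.
  induction H2; intros e1 H1.
  - destruct (stripN _ _ H1 y (step_par _ _ H)) as [t3 [Ht1 Ht2]].
    exists t3. split; auto. apply par_steps; auto.
  - exists e1. split. apply rt_refl. auto.
  - destruct (IHclos_refl_trans1 e1 H1) as [e' [Ha Hb]].
    destruct (IHclos_refl_trans2 e' Hb) as [e'' [Hc Hd]].
    exists e''. split; auto. eapply rt_trans; eauto.
Qed.
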